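(* Let $M$ be a Hausdorff space with continuous semiflow $(t,\omega)\mapsto t\omega$, $Z$ a Banach space, $A:D(A)\subset Z\to Z$ a closed linear operator, and $B,L:M\to L(Z,Z)$ each satisfying: $(\omega,z)\mapsto B(\omega)z$ (resp. $L(\omega)z$) is continuous, $\sup_{t\ge0}|B(t\omega)|<\infty$ (resp. $\sup_{t\ge0}|L(t\omega)|<\infty$) for every $\omega$, and these suprema are locally bounded in $\omega$. Let $\mathcal{C}(\omega)=AB(\omega)+L(\omega)$ and consider $\dot z(t)=\mathcal{C}(t\omega)z(t)$ (L) and, for $g\in C(\mathbb{R},Z)$, $\dot z(t)=\mathcal{C}(t\omega)z(t)+g(t)$ (G). (1) If (L) generates a $C_0$ linear cocycle $T_0$, then every mild solution $z\in C([0,a],Z)$ of (G) satisfies $z(t)=T_0(t,\omega)z(0)+\int_0^tT_0(t-s,s\omega)g(s)\,ds$ for $t\in[0,a]$. (2) If (L) generates a $C_0$ cocycle correspondence $\{H_1(t,\omega)\sim(T_1(t,\omega),S_1(-t,t\omega))\}$ with spectral projections $P_\omega$, $P^c_\omega$, then every mild solution $z\in C([0,a],Z)$ of (G) satisfies, with $x(t)=P_{t\omega}z(t)$, $y(t)=P^c_{t\omega}z(t)$: $x(t)=T_1(t,\omega)x(0)+\int_0^tT_1(t-s,s\omega)P_{s\omega}g(s)\,ds$ and $y(t)=S_1(t-a,a\omega)y(a)-\int_t^aS_1(t-s,s\omega)P^c_{s\omega}g(s)\,ds$ for $t\in[0,a]$.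
   Context: A mild solution of (G) on $[a_0,b]$ is $u\in C([a_0,b],Z)$ with $\int_{a_0}^tB(s\omega)u(s)ds\in D(A)$ and $u(t)=u(a_0)+A\int_{a_0}^tB(s\omega)u(s)ds+\int_{a_0}^t(L(s\omega)u(s)+g(s))ds$ for $t\in[a_0,b]$; for (L) take $g=0$. (L) generates a $C_0$ linear cocycle $T_0$ if $T_0(t,\omega)\in L(Z,Z)$, $T_0(0,\omega)=\mathrm{id}$, $T_0(t+s,\omega)=T_0(t,s\omega)T_0(s,\omega)$, $(t,\omega,x)\mapsto T_0(t,\omega)x$ continuous, and for every $x\in Z$ the function $z(t)=T_0(t,\omega)x$, $t\ge0$, is the unique mild solution of (L) with $z(0)=x$. (L) generates a $C_0$ cocycle correspondence if: $Z=X_\omega\oplus Y_\omega$ with projections $P_\omega$ (onto $X_\omega$), $P^c_\omega=I-P_\omega$, $(\omega,z)\mapsto P_\omega z$ continuous; $T_1(t,\omega)\in L(X_\omega,X_{t\omega})$ is a strongly continuous linear cocycle; $S_1(-t,t\omega)\in L(Y_{t\omega},Y_\omega)$ ($t\ge0$; indexed by $(t,\omega)$, with $S_1(t-s,s\omega)$ for $t\le s$ denoting $S_1(-(s-t),(s-t)(t\omega)):Y_{s\omega}\to Y_{t\omega}$), $S_1(0,\omega)=\mathrm{id}$, $S_1(-(t+s),(t+s)\omega)=S_1(-s,s\omega)S_1(-t,t(s\omega))$, strongly continuous; and for $t_1\le t_2$, $x_1\in X_{t_1\omega}$, $y_2\in Y_{t_2\omega}$, $z(t)=T_1(t-t_1,t_1\omega)x_1+S_1(t-t_2,t_2\omega)y_2$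 ($t_1\le t\le t_2$) is the unique mild solution of (L) on $[t_1,t_2]$ with $P_{t_1\omega}z(t_1)=x_1$, $P^c_{t_2\omega}z(t_2)=y_2$. *)

(* Defs.v *)
From Stdlib Require Import Reals.
From Coquelicot Require Import Coquelicot.
Open Scope R_scope.

Record topology (M : Type) := Topology {
  is_open : (M -> Prop) -> Prop;
  open_full : is_open (fun _ => True);
  open_inter : forall U V, is_open U -> is_open V -> is_open (fun x => U x /\ V x);
  open_union : forall (I : Type) (F : I -> M -> Prop),
      (forall i, is_open (F i)) -> is_open (fun x => exists i, F i x) }.
Arguments is_open {M} t _.

Definition hausdorff {M : Type} (tau : topology M) : Prop :=
  forall x y : M, x <> y -> exists U V, is_open tau U /\ is_open tau V /\
    U x /\ V y /\ forall w, ~ (U w /\ V w).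

Section Setting.
Context {M : Type} (tau : topology M) {Z : CompleteNormedModule R_AbsRing}.

Definition semiflow (phi : R -> M -> M) : Prop :=
  (forall w, phi 0 w = w) /\
  (forall t s w, 0 <= t -> 0 <= s -> phi (t + s) w = phi t (phi s w)) /\
  (forall t w V, 0 <= t -> is_open tau V -> V (phi t w) ->
     exists d U, 0 < d /\ is_open tau U /\ U w /\
       forall s w', 0 <= s -> Rabs (s - t) < d -> U w' -> V (phi s w')).

Definition cont_MZ (F : M -> Z -> Z) : Prop :=
  forall w z eps, 0 < eps -> exists U d, is_open tau U /\ U w /\ 0 < d /\
    forall w' z', U w' -> norm (minus z' z) < d -> norm (minus (F w' z') (F w z)) < eps.

Definition coef_op (phi : R -> M -> M) (F : M -> Z -> Z) : Prop :=
  (forall w, is_linear (F w)) /\ cont_MZ F /\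
  (forall w, exists K, forall t z, 0 <= t -> norm (F (phi t w) z) <= K * norm z) /\
  (forall w, exists U K, is_open tau U /\ U w /\
     forall w' t z, U w' -> 0 <= t -> norm (F (phi t w') z) <= K * norm z).

Definition closed_op (D : Z -> Prop) (A : Z -> Z) : Prop :=
  D zero /\
  (forall x y, D x -> D y -> D (plus x y) /\ A (plus x y) = plus (A x) (A y)) /\
  (forall (k : R) x, D x -> D (scal k x) /\ A (scal k x) = scal k (A x)) /\
  (forall (xn : nat -> Z) x y, (forall n, D (xn n)) ->
     filterlim xn eventually (locally x) ->
     filterlim (fun n => A (xn n)) eventually (locally y) -> D x /\ A x = y).

Definition cont_on (a0 b : R) (u : R -> Z) : Prop :=
  forall t eps, a0 <= t <= b -> 0 < eps -> exists d, 0 < d /\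
    forall s, a0 <= s <= b -> Rabs (s - t) < d -> norm (minus (u s) (u t)) < eps.

Definition mild_sol (D : Z -> Prop) (A : Z -> Z) (B L : M -> Z -> Z)
  (phi : R -> M -> M) (w : M) (g : R -> Z) (a0 b : R) (u : R -> Z) : Prop :=
  cont_on a0 b u /\
  forall t, a0 <= t <= b ->
    D (RInt (fun s => B (phi s w) (u s)) a0 t) /\
    u t = plus (plus (u a0) (A (RInt (fun s => B (phi s w) (u s)) a0 t)))
               (RInt (fun s => plus (L (phi s w) (u s)) (g s)) a0 t).

Definition zero_fun : R -> Z := fun _ => zero.

Definition C0_cocycle (D : Z -> Prop) (A : Z -> Z) (B L : M -> Z -> Z)
  (phi : R -> M -> M) (T0 : R -> M -> Z -> Z) : Prop :=
  (forall t w, 0 <= t -> is_linear (T0 t w)) /\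
  (forall w x, T0 0 w x = x) /\
  (forall t s w x, 0 <= t -> 0 <= s -> T0 (t + s) w x = T0 t (phi s w) (T0 s w x)) /\
  (forall t w x eps, 0 <= t -> 0 < eps -> exists d U, 0 < d /\ is_open tau U /\ U w /\
     forall s w' x', 0 <= s -> Rabs (s - t) < d -> U w' -> norm (minus x' x) < d ->
       norm (minus (T0 s w' x') (T0 t w x)) < eps) /\
  (forall w x b, 0 <= b ->
     mild_sol D A B L phi w zero_fun 0 b (fun t => T0 t w x) /\
     forall u, mild_sol D A B L phi w zero_fun 0 b u -> u 0 = x ->
       forall t, 0 <= t <= b -> u t = T0 t w x).

Definition Pc (P : M -> Z -> Z) (w : M) (z : Z) : Z := minus z (P w z).
Definition Xsp (P : M -> Z -> Z) (w : M) (x : Z) : Prop := P w x = x.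
Definition Ysp (P : M -> Z -> Z) (w : M) (y : Z) : Prop := Pc P w y = y.

Definition lin_between (S1 S2 : Z -> Prop) (T : Z -> Z) : Prop :=
  (forall x, S1 x -> S2 (T x)) /\
  (forall x y, S1 x -> S1 y -> T (plus x y) = plus (T x) (T y)) /\
  (forall (k : R) x, S1 x -> T (scal k x) = scal k (T x)) /\
  (exists K, forall x, S1 x -> norm (T x) <= K * norm x).

(** (L) generates the C_0 cocycle correspondence
    H_1(t,w) ~ (T1(t,w), S1(-t,tw)); here  Sb t w  stands for  S1(-t, t w) :
    Y_{tw} -> Y_w, so that S1(t-s, s w) (t <= s) is  Sb (s-t) (phi t w). *)
Definition C0_correspondence (D : Z -> Prop) (A : Z -> Z) (B L : M -> Z -> Z)
  (phi : R -> M -> M) (P : M -> Z -> Z) (T1 Sb : R -> M -> Z -> Z) : Prop :=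
  (forall w, is_linear (P w)) /\ (forall w z, P w (P w z) = P w z) /\ cont_MZ P /\
  (forall t w, 0 <= t -> lin_between (Xsp P w) (Xsp P (phi t w)) (T1 t w)) /\
  (forall w x, Xsp P w x -> T1 0 w x = x) /\
  (forall t s w x, 0 <= t -> 0 <= s -> Xsp P w x ->
     T1 (t + s) w x = T1 t (phi s w) (T1 s w x)) /\
  (forall t w x eps, 0 <= t -> Xsp P w x -> 0 < eps ->
     exists d U, 0 < d /\ is_open tau U /\ U w /\
     forall s w' x', 0 <= s -> Rabs (s - t) < d -> U w' -> Xsp P w' x' ->
       norm (minus x' x) < d -> norm (minus (T1 s w' x') (T1 t w x)) < eps) /\
  (forall t w, 0 <= t -> lin_between (Ysp P (phi t w)) (Ysp P w) (Sb t w)) /\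
  (forall w y, Ysp P w y -> Sb 0 w y = y) /\
  (forall t s w y, 0 <= t -> 0 <= s -> Ysp P (phi (t + s) w) y ->
     Sb (t + s) w y = Sb s w (Sb t (phi s w) y)) /\
  (forall t w y eps, 0 <= t -> Ysp P (phi t w) y -> 0 < eps ->
     exists d U, 0 < d /\ is_open tau U /\ U w /\
     forall s w' y', 0 <= s -> Rabs (s - t) < d -> U w' -> Ysp P (phi s w') y' ->
       norm (minus y' y) < d -> norm (minus (Sb s w' y') (Sb t w y)) < eps) /\
  (forall w t1 t2 x1 y2, 0 <= t1 -> t1 <= t2 ->
     Xsp P (phi t1 w) x1 -> Ysp P (phi t2 w) y2 ->
     let z := fun t => plus (T1 (t - t1) (phi t1 w) x1) (Sb (t2 - t) (phi t w) y2) in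
     (mild_sol D A B L phi w zero_fun t1 t2 z /\
      P (phi t1 w) (z t1) = x1 /\ Pc P (phi t2 w) (z t2) = y2) /\
     forall u, mild_sol D A B L phi w zero_fun t1 t2 u ->
       P (phi t1 w) (u t1) = x1 -> Pc P (phi t2 w) (u t2) = y2 ->
       forall t, t1 <= t <= t2 -> u t = z t).

End Setting.

(* Main.v *)
Require Import Defs.
From Stdlib Require Import Reals.
From Stdlib Require Import Lra Lia Classical ClassicalEpsilon.
From Coquelicot Require Import Coquelicot.
Open Scope R_scope.


Section Gen.
Context {Z : CompleteNormedModule R_AbsRing}.

Lemma cont_eps (f : R -> Z) x : continuous f x -> forall eps, 0 < eps ->
  exists d, 0 < d /\ forall y, Rabs (y - x) < d -> norm (minus (f y) (f x)) < eps.
Proof.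
  intros Hc eps He.
  destruct (proj1 (filterlim_locally_ball_norm _ _) Hc (mkposreal eps He)) as [d Hd].
  exists d; split; [apply cond_pos|]. intros y Hy. apply (Hd y). exact Hy.
Qed.

Lemma eps_cont (f : R -> Z) x : (forall eps, 0 < eps ->
  exists d, 0 < d /\ forall y, Rabs (y - x) < d -> norm (minus (f y) (f x)) < eps) ->
  continuous f x.
Proof.
  intros H P [eps HP].
  destruct (H eps (cond_pos eps)) as [d [Hd Hd']].
  exists (mkposreal d Hd). intros y Hy. apply HP. exact (norm_compat1 _ _ _ (Hd' y Hy)).
Qed.

Definition clamp (a b x : R) := Rmax a (Rmin b x).

Lemma clamp_in a b x : a <= b -> a <= clamp a b x <= b.
Proof. intros; unfold clamp, Rmax, Rmin; repeat destruct Rle_dec; lra. Qed.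
Lemma clamp_id a b x : a <= x <= b -> clamp a b x = x.
Proof. intros; unfold clamp, Rmax, Rmin; repeat destruct Rle_dec; lra. Qed.
Lemma clamp_lip a b x y : a <= b -> Rabs (clamp a b x - clamp a b y) <= Rabs (x - y).
Proof. intros; unfold clamp, Rmax, Rmin; repeat destruct Rle_dec;
  unfold Rabs; repeat destruct Rcase_abs; lra. Qed.

Lemma cont_on_sub a b c d (f : R -> Z) : cont_on a b f -> a <= c -> d <= b -> cont_on c d f.
Proof.
  intros H H1 H2 t eps Ht He. destruct (H t eps) as [d0 [Hd0 Hd0']]; try lra.
  exists d0; split; auto. intros s Hs Hst. apply Hd0'; auto; lra.
Qed.

Lemma cont_on_clamp a b (f : R -> Z) : a <= b -> cont_on a b f ->
  forall x, continuous (fun y => f (clamp a b y)) x.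
Proof.
  intros Hab H x. apply eps_cont. intros eps He.
  destruct (H (clamp a b x) eps (clamp_in a b x Hab) He) as [d [Hd Hd']].
  exists d; split; auto. intros y Hy. apply Hd'. apply clamp_in; auto.
  eapply Rle_lt_trans; [apply clamp_lip; auto| exact Hy].
Qed.

Lemma EXI a b u v (f : R -> Z) : a <= u <= b -> a <= v <= b -> cont_on a b f ->
  ex_RInt f u v.
Proof.
  intros Hu Hv H.
  apply ex_RInt_ext with (f := fun y => f (clamp a b y)).
  { intros x Hx. rewrite clamp_id; auto.
    unfold Rmin, Rmax in Hx; destruct Rle_dec in Hx; lra. }
  apply ex_RInt_continuous. intros z _. apply cont_on_clamp; auto; lra.
Qed.

End Gen.


Section Gen.
Context {Z : CompleteNormedModule R_AbsRing}.

Lemma norm_minus_sym (a b : Z) : norm (minus a b) = norm (minus b a).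
Proof. rewrite <- norm_opp, opp_minus; reflexivity. Qed.

Lemma norm_minus_tri (a b c : Z) : norm (minus a c) <= norm (minus a b) + norm (minus b c).
Proof. rewrite (minus_trans b a c). apply (@norm_triangle R_AbsRing Z). Qed.

Definition cont2 (al be : R) (F : R -> R -> Z) := forall x y eps,
  al <= x <= be -> al <= y <= be -> 0 < eps -> exists d, 0 < d /\
  forall x' y', al <= x' <= be -> al <= y' <= be -> Rabs (x' - x) < d -> Rabs (y' - y) < d ->
  norm (minus (F x' y') (F x y)) < eps.

Definition ucont2 (al be : R) (F : R -> R -> Z) := forall eps, 0 < eps -> exists d, 0 < d /\
  forall x y x' y', al <= x <= be -> al <= y <= be -> al <= x' <= be -> al <= y' <= be ->
  Rabs (x' - x) < d -> Rabs (y' - y) < d -> norm (minus (F x' y') (F x y)) < eps.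

Lemma UC2 al be F : cont2 al be F -> ucont2 al be F.
Proof.
  intros Hc eps He.
  assert (Hch : forall u v : R, {d : posreal | al <= u <= be -> al <= v <= be ->
     forall x' y', al <= x' <= be -> al <= y' <= be -> Rabs (x' - u) < d -> Rabs (y' - v) < d ->
     norm (minus (F x' y') (F u v)) < eps / 2}).
  { intros u v. apply constructive_indefinite_description.
    destruct (classic (al <= u <= be /\ al <= v <= be)) as [[Hu Hv]|Hn].
    - destruct (Hc u v (eps/2) Hu Hv) as [d [Hd H]]; [lra|].
      exists (mkposreal d Hd). intros; apply H; auto.
    - exists (mkposreal 1 Rlt_0_1). intros; exfalso; tauto. }
  destruct (compactness_value_2d al be al be (fun u v => pos_div_2 (proj1_sig (Hch u v))))
    as [d Hd].
  exists d; split; [apply cond_pos|].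
  intros x y x' y' Hx Hy Hx' Hy' Hxx Hyy.
  apply NNPP; intro Hneg. apply (Hd x y Hx Hy).
  intros [u [v [Hu [Hv [Hxu [Hyv Hdle]]]]]]. apply Hneg.
  destruct (Hch u v) as [D0 HD0]; simpl in *.
  assert (H1 : norm (minus (F x' y') (F u v)) < eps / 2).
  { apply HD0; auto.
    - replace (x' - u) with ((x' - x) + (x - u)) by ring.
      eapply Rle_lt_trans; [apply Rabs_triang|]. lra.
    - replace (y' - v) with ((y' - y) + (y - v)) by ring.
      eapply Rle_lt_trans; [apply Rabs_triang|]. lra. }
  assert (H2 : norm (minus (F x y) (F u v)) < eps / 2).
  { pose proof (cond_pos D0). apply HD0; auto; lra. }
  eapply Rle_lt_trans; [apply (norm_minus_tri _ (F u v))|].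
  rewrite (norm_minus_sym (F u v)). lra.
Qed.

Lemma nat_big (x : R) : exists N : nat, x < INR N /\ (0 < N)%nat.
Proof.
  destruct (INR_unbounded x) as [n Hn]. exists (S n). split.
  - rewrite S_INR; lra.
  - lia.
Qed.

Lemma bound2 al be F : al <= be -> cont2 al be F -> exists M, 0 <= M /\
  forall x y, al <= x <= be -> al <= y <= be -> norm (F x y) <= M.
Proof.
  intros Hab Hc. destruct (UC2 _ _ _ Hc 1 Rlt_0_1) as [d [Hd Hu]].
  destruct (nat_big ((be - al) / d)) as [N [HN HN0]].
  assert (HNp : 0 < INR N) by (apply lt_0_INR; lia).
  exists (norm (F al al) + INR N). split.
  { pose proof (norm_ge_0 (F al al)); lra. }
  intros x y Hx Hy.
  set (p := fun (j : nat) (z : R) => al + (INR j / INR N) * (z - al)).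
  assert (Hp : forall j z, (j <= N)%nat -> al <= z <= be -> al <= p j z <= be).
  { intros j z Hj Hz. unfold p.
    assert (0 <= INR j / INR N <= 1).
    { split. apply Rdiv_le_0_compat; [apply pos_INR|lra].
      apply Rmult_le_reg_r with (INR N); auto. unfold Rdiv.
      rewrite Rmult_assoc, Rinv_l by lra. rewrite Rmult_1_r, Rmult_1_l. apply le_INR; auto. }
    nra. }
  assert (Hstep : forall j z, al <= z <= be -> Rabs (p (S j) z - p j z) < d).
  { intros j z Hz. unfold p. rewrite S_INR.
    replace (al + (INR j + 1) / INR N * (z - al) - (al + INR j / INR N * (z - al)))
      with ((z - al) / INR N) by (field; lra).
    rewrite Rabs_pos_eq.
    2: { apply Rdiv_le_0_compat; lra. }
    apply Rle_lt_trans with ((be - al) / INR N).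
    { unfold Rdiv; apply Rmult_le_compat_r; [left; apply Rinv_0_lt_compat; lra| lra]. }
    apply Rmult_lt_reg_r with (INR N); auto. unfold Rdiv.
    rewrite Rmult_assoc, Rinv_l by lra. rewrite Rmult_1_r.
    apply Rmult_lt_reg_r with (/ d). apply Rinv_0_lt_compat; lra.
    rewrite (Rmult_comm d), Rmult_assoc, Rinv_r by lra. rewrite Rmult_1_r. lra. }
  assert (Hind : forall j, (j <= N)%nat -> norm (F (p j x) (p j y)) <= norm (F al al) + INR j).
  { induction j as [|j IH]; intros Hj.
    - unfold p. simpl. replace (al + 0 / INR N * (x - al)) with al by (field; lra).
      replace (al + 0 / INR N * (y - al)) with al by (field; lra). lra.
    - assert (IH' := IH ltac:(lia)). rewrite S_INR.
      assert (norm (minus (F (p (S j) x) (p (S j) y)) (F (p j x) (p j y))) < 1).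
      { apply Hu; try apply Hp; auto; try lia; apply Hstep; auto. }
      replace (F (p (S j) x) (p (S j) y)) with
        (plus (minus (F (p (S j) x) (p (S j) y)) (F (p j x) (p j y))) (F (p j x) (p j y))).
      2: { unfold minus. rewrite <- plus_assoc, plus_opp_l, plus_zero_r. reflexivity. }
      eapply Rle_trans; [apply (@norm_triangle R_AbsRing Z)|]. lra. }
  specialize (Hind N (le_n N)). unfold p in Hind.
  replace (al + INR N / INR N * (x - al)) with x in Hind by (field; lra).
  replace (al + INR N / INR N * (y - al)) with y in Hind by (field; lra). exact Hind.
Qed.

End Gen.


Lemma minus_plus_plus {G : AbelianGroup} (a b c d : G) :
  minus (plus a b) (plus c d) = plus (minus a c) (minus b d).
Proof.
  unfold minus. rewrite opp_plus. rewrite <- !plus_assoc. f_equal.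
  rewrite !plus_assoc. f_equal. apply plus_comm.
Qed.

Section Gen.
Context {Z : CompleteNormedModule R_AbsRing}.

Lemma UC1 a b (f : R -> Z) : cont_on a b f -> forall eps, 0 < eps -> exists d, 0 < d /\
  forall x x', a <= x <= b -> a <= x' <= b -> Rabs (x' - x) < d -> norm (minus (f x') (f x)) < eps.
Proof.
  intros Hc eps He.
  assert (H2 : cont2 a b (fun x _ => f x)).
  { intros x y e Hx Hy Hee. destruct (Hc x e Hx Hee) as [d [Hd Hd']].
    exists d; split; auto. }
  destruct (UC2 _ _ _ H2 eps He) as [d [Hd Hd']].
  exists d; split; auto. intros x x' Hx Hx' Hxx. apply (Hd' x x x' x); auto.
  all: rewrite Rminus_eq_0, Rabs_R0; auto.
Qed.

Lemma eqc_n (u v : Z) : (forall eps, 0 < eps -> norm (minus u v) <= eps) -> u = v.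
Proof.
  intros H. assert (Hn : norm (minus u v) = 0).
  { destruct (Rle_lt_or_eq_dec 0 (norm (minus u v)) (norm_ge_0 _)) as [Hp|Hp]; auto.
    exfalso. assert (0 < norm (minus u v) / 2) by lra.
    specialize (H (norm (minus u v) / 2) H0). lra. }
  apply norm_eq_zero in Hn.
  replace u with (plus (minus u v) v).
  - rewrite Hn. apply plus_zero_l.
  - unfold minus. rewrite <- plus_assoc, plus_opp_l, plus_zero_r. reflexivity.
Qed.

Fixpoint ssum (n : nat) (F : nat -> Z) : Z :=
  match n with O => zero | S k => plus (ssum k F) (F k) end.


Lemma ssum_minus n F G : minus (ssum n F) (ssum n G) = ssum n (fun k => minus (F k) (G k)).
Proof.
  induction n; simpl.
  - apply (@minus_eq_zero Z).
  - rewrite (@minus_plus_plus Z), IHn. reflexivity.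
Qed.

Lemma ssum_norm n F e : (forall k, (k < n)%nat -> norm (F k) <= e) -> norm (ssum n F) <= INR n * e.
Proof.
  induction n; intros H; cbn [ssum].
  - simpl INR. rewrite Rmult_0_l. right. exact (@norm_zero R_AbsRing Z).
  - eapply Rle_trans; [apply (@norm_triangle R_AbsRing Z)|].
    rewrite S_INR. assert (norm (F n) <= e) by (apply H; lia).
    assert (norm (ssum n F) <= INR n * e) by (apply IHn; intros; apply H; lia). lra.
Qed.

Definition hstep c d n := (d - c) / INR (S n).
Definition rpt c d n k := c + INR k * hstep c d n.
Definition rsum (f : R -> Z) c d n :=
  ssum (S n) (fun k => scal (hstep c d n) (f (rpt c d n k))).

Lemma hstep_pos c d n : c <= d -> 0 <= hstep c d n.
Proof. intros; unfold hstep. apply Rdiv_le_0_compat; [lra| apply lt_0_INR; lia]. Qed.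

Lemma rpt_in c d n k : c <= d -> (k <= S n)%nat -> c <= rpt c d n k <= d.
Proof.
  intros Hcd Hk. unfold rpt, hstep.
  assert (HN : 0 < INR (S n)) by (apply lt_0_INR; lia).
  assert (Hk' : 0 <= INR k <= INR (S n)) by (split; [apply pos_INR| apply le_INR; auto]).
  set (N := INR (S n)) in *. set (K := INR k) in *.
  replace (c + K * ((d - c) / N)) with (c + (K / N) * (d - c)) by (field; lra).
  assert (0 <= K / N <= 1).
  { split. apply Rdiv_le_0_compat; lra.
    apply Rmult_le_reg_r with N; auto. unfold Rdiv.
    rewrite Rmult_assoc, Rinv_l by lra. lra. }
  set (t := K / N) in *. split.
  - assert (0 <= t * (d - c)) by (apply Rmult_le_pos; lra). lra.
  - assert (t * (d - c) <= 1 * (d - c)) by (apply Rmult_le_compat_r; lra). lra.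
Qed.

Lemma rpt_S c d n k : rpt c d n (S k) = rpt c d n k + hstep c d n.
Proof. unfold rpt; rewrite S_INR; ring. Qed.

Lemma rpt_0 c d n : rpt c d n 0 = c.
Proof. unfold rpt; simpl; ring. Qed.

Lemma rpt_end c d n : rpt c d n (S n) = d.
Proof.
  unfold rpt, hstep. assert (0 < INR (S n)) by (apply lt_0_INR; lia). field. lra.
Qed.

Lemma chasles_sum c d n (f : R -> Z) : c <= d -> cont_on c d f ->
  forall m, (m <= S n)%nat ->
  RInt f c (rpt c d n m) = ssum m (fun k => RInt f (rpt c d n k) (rpt c d n (S k))).
Proof.
  intros Hcd Hf m. induction m; intros Hm; simpl.
  - rewrite rpt_0. apply RInt_point.
  - rewrite <- IHm by lia.
    apply eq_sym, RInt_Chasles.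
    + apply (EXI c d); auto; [lra| apply rpt_in; auto; lia].
    + apply (EXI c d); auto; apply rpt_in; auto; lia.
Qed.

Lemma RS c d (f : R -> Z) : c <= d -> cont_on c d f -> forall eps, 0 < eps ->
  exists N, forall n, (N <= n)%nat -> norm (minus (RInt f c d) (rsum f c d n)) <= eps.
Proof.
  intros Hcd Hf eps He.
  set (e1 := eps / (d - c + 1)).
  assert (He1 : 0 < e1) by (unfold e1; apply Rdiv_lt_0_compat; lra).
  destruct (UC1 c d f Hf e1 He1) as [dl [Hdl Hu]].
  destruct (nat_big ((d - c) / dl)) as [N [HN _]].
  exists N. intros n Hn.
  assert (HSn : 0 < INR (S n)) by (apply lt_0_INR; lia).
  assert (Hh : hstep c d n < dl).
  { unfold hstep. apply Rmult_lt_reg_r with (INR (S n)); auto. unfold Rdiv.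
    rewrite Rmult_assoc, Rinv_l by lra. rewrite Rmult_1_r.
    assert (INR N <= INR (S n)) by (apply le_INR; lia).
    assert ((d - c) / dl * dl = d - c) by (field; lra).
    assert ((d - c) / dl * dl < INR (S n) * dl) by (apply Rmult_lt_compat_r; lra). lra. }
  pose proof (hstep_pos c d n Hcd) as Hh0.
  unfold rsum. rewrite <- (rpt_end c d n) at 1.
  rewrite (chasles_sum c d n f Hcd Hf (S n) (le_n _)).
  rewrite ssum_minus.
  eapply Rle_trans.
  { apply ssum_norm with (e := hstep c d n * e1). intros k Hk.
    assert (Hk1 : c <= rpt c d n k <= d) by (apply rpt_in; auto; lia).
    assert (Hk2 : c <= rpt c d n (S k) <= d) by (apply rpt_in; auto; lia).
    assert (Hex : ex_RInt f (rpt c d n k) (rpt c d n (S k))) by (apply (EXI c d); auto).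
    replace (minus (RInt f (rpt c d n k) (rpt c d n (S k)))
                   (scal (hstep c d n) (f (rpt c d n k))))
      with (RInt (fun x => minus (f x) (f (rpt c d n k))) (rpt c d n k) (rpt c d n (S k))).
    2: { rewrite (@RInt_minus Z); auto. 2: apply ex_RInt_const.
         rewrite (@RInt_const Z), rpt_S. f_equal. f_equal. ring. }
    replace (hstep c d n * e1) with ((rpt c d n (S k) - rpt c d n k) * e1)
      by (rewrite rpt_S; ring).
    apply (@norm_RInt_le_const Z (fun x => minus (f x) (f (rpt c d n k)))).
    - rewrite rpt_S; lra.
    - intros x Hx. rewrite rpt_S in Hx, Hk2. left.
      apply Hu; [exact Hk1 | lra | rewrite Rabs_pos_eq by lra; lra].
    - apply (@RInt_correct Z). apply (@ex_RInt_minus Z); [exact Hex | apply (@ex_RInt_const Z)]. }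
  unfold hstep, e1.
  replace (INR (S n) * ((d - c) / INR (S n) * (eps / (d - c + 1))))
    with (eps * ((d - c) / (d - c + 1))) by (field; lra).
  assert ((d - c) / (d - c + 1) <= 1).
  { apply Rmult_le_reg_r with (d - c + 1); [lra|]. unfold Rdiv.
    rewrite Rmult_assoc, Rinv_l by lra. lra. }
  rewrite <- (Rmult_1_r eps) at 2. apply Rmult_le_compat_l; lra.
Qed.

End Gen.


Section Gen.
Context {Z : CompleteNormedModule R_AbsRing}.

Lemma lin_zero (l : Z -> Z) : is_linear l -> l zero = zero.
Proof.
  intros H. assert (E : (zero : Z) = scal (0:R) (zero:Z)) by (symmetry; apply (@scal_zero_l _ Z)).
  rewrite E at 1. rewrite (linear_scal l H). apply (@scal_zero_l _ Z).
Qed.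

Lemma lin_opp (l : Z -> Z) x : is_linear l -> l (opp x) = opp (l x).
Proof.
  intros H. assert (E : forall y : Z, opp y = scal (opp one : R_AbsRing) y)
    by (intros; symmetry; apply (@scal_opp_one _ Z)).
  rewrite !E. apply (linear_scal l H).
Qed.

Lemma lin_minus (l : Z -> Z) x y : is_linear l -> l (minus x y) = minus (l x) (l y).
Proof.
  intros H. unfold minus. rewrite (linear_plus l H), lin_opp; auto.
Qed.

Lemma lin_bound (l : Z -> Z) : is_linear l -> exists M, 0 < M /\
  forall x y, norm (minus (l x) (l y)) <= M * norm (minus x y).
Proof.
  intros H. destruct (linear_norm l H) as [M [HM HM']].
  exists M; split; auto. intros x y. rewrite <- lin_minus; auto.
Qed.

Lemma cont_on_lin a b (f : R -> Z) (l : Z -> Z) : is_linear l -> cont_on a b f ->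
  cont_on a b (fun x => l (f x)).
Proof.
  intros Hl Hf t eps Ht He. destruct (lin_bound l Hl) as [M [HM HM']].
  destruct (Hf t (eps / M) Ht) as [d [Hd Hd']]. apply Rdiv_lt_0_compat; auto.
  exists d; split; auto. intros s Hs Hst.
  eapply Rle_lt_trans; [apply HM'|].
  apply Rmult_lt_reg_l with (/ M). apply Rinv_0_lt_compat; auto.
  rewrite <- Rmult_assoc, Rinv_l, Rmult_1_l by lra.
  rewrite Rmult_comm. apply Hd'; auto.
Qed.

Lemma lin_ssum (l : Z -> Z) n F : is_linear l -> l (ssum n F) = ssum n (fun k => l (F k)).
Proof.
  intros H. induction n; cbn [ssum].
  - apply lin_zero; auto.
  - rewrite (linear_plus l H), IHn. reflexivity.
Qed.

Lemma lin_rsum (l : Z -> Z) f c d n : is_linear l ->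
  l (rsum f c d n) = rsum (fun x => l (f x)) c d n.
Proof.
  intros H. unfold rsum. rewrite lin_ssum; auto. f_equal.
  apply FunctionalExtensionality.functional_extensionality. intros k.
  apply (linear_scal l H).
Qed.

Lemma LC (l : Z -> Z) c d f : is_linear l -> c <= d -> cont_on c d f ->
  l (RInt f c d) = RInt (fun x => l (f x)) c d.
Proof.
  intros Hl Hcd Hf. apply (@eqc_n Z). intros eps He.
  destruct (lin_bound l Hl) as [M [HM HM']].
  assert (Hf' := cont_on_lin c d f l Hl Hf).
  set (e1 := eps / (M + 1)).
  assert (He1 : 0 < e1) by (unfold e1; apply Rdiv_lt_0_compat; lra).
  destruct (RS c d f Hcd Hf e1 He1) as [N1 HN1].
  destruct (RS c d _ Hcd Hf' e1 He1) as [N2 HN2].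
  specialize (HN1 (N1 + N2)%nat ltac:(lia)). specialize (HN2 (N1 + N2)%nat ltac:(lia)).
  eapply Rle_trans; [apply (norm_minus_tri _ (l (rsum f c d (N1 + N2))))|].
  assert (norm (minus (l (rsum f c d (N1 + N2))) (RInt (fun x => l (f x)) c d)) <= e1).
  { rewrite lin_rsum by auto. rewrite norm_minus_sym. exact HN2. }
  assert (norm (minus (l (RInt f c d)) (l (rsum f c d (N1 + N2)))) <= M * e1).
  { eapply Rle_trans; [apply HM'|]. apply Rmult_le_compat_l; lra. }
  assert (M * e1 + e1 = eps) by (unfold e1; field; lra). lra.
Qed.

Lemma lim_seq_norm (xn : nat -> Z) x :
  (forall eps, 0 < eps -> exists N, forall n, (N <= n)%nat -> norm (minus (xn n) x) < eps) ->
  filterlim xn eventually (locally x).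
Proof.
  intros H P [eps HP]. destruct (H eps (cond_pos eps)) as [N HN].
  exists N. intros n Hn. apply HP. exact (norm_compat1 _ _ _ (HN n Hn)).
Qed.

Lemma rsum_lim c d (f : R -> Z) : c <= d -> cont_on c d f ->
  filterlim (fun n => rsum f c d n) eventually (locally (RInt f c d)).
Proof.
  intros Hcd Hf. apply lim_seq_norm. intros eps He.
  destruct (RS c d f Hcd Hf (eps/2)) as [N HN]; [lra|].
  exists N. intros n Hn. rewrite norm_minus_sym. specialize (HN n Hn). lra.
Qed.

Lemma closed_zero (D : Z -> Prop) A : closed_op D A -> A zero = zero.
Proof.
  intros [H0 [Hp [Hs Hc]]].
  assert (E : (zero : Z) = scal (0:R) (zero:Z)) by (symmetry; apply (@scal_zero_l _ Z)).
  rewrite E at 1. rewrite (proj2 (Hs _ _ H0)). apply (@scal_zero_l _ Z).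
Qed.

Lemma CI (D : Z -> Prop) A c d (Phi Psi : R -> Z) : closed_op D A -> c <= d ->
  cont_on c d Phi -> cont_on c d Psi ->
  (forall r, c <= r <= d -> D (Phi r) /\ A (Phi r) = Psi r) ->
  D (RInt Phi c d) /\ A (RInt Phi c d) = RInt Psi c d.
Proof.
  intros HA Hcd HPhi HPsi H.
  assert (HA' := HA). destruct HA' as [H0 [Hp [Hs Hc]]].
  assert (Hn : forall n, D (rsum Phi c d n) /\ A (rsum Phi c d n) = rsum Psi c d n).
  { intros n. unfold rsum.
    assert (Hm : forall m, (m <= S n)%nat ->
      D (ssum m (fun k => scal (hstep c d n) (Phi (rpt c d n k)))) /\
      A (ssum m (fun k => scal (hstep c d n) (Phi (rpt c d n k)))) =
      ssum m (fun k => scal (hstep c d n) (Psi (rpt c d n k)))).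
    { induction m; intros Hm; cbn [ssum].
      - split; auto. eapply closed_zero; eauto.
      - destruct (IHm ltac:(lia)) as [IH1 IH2].
        destruct (H (rpt c d n m)) as [Hr1 Hr2]. apply rpt_in; auto; lia.
        destruct (Hs (hstep c d n) _ Hr1) as [Hs1 Hs2].
        destruct (Hp _ _ IH1 Hs1) as [Hp1 Hp2].
        split; auto. rewrite Hp2, IH2, Hs2, Hr2. reflexivity. }
    apply Hm; lia. }
  apply (Hc (fun n => rsum Phi c d n)).
  - intros n; apply Hn.
  - apply rsum_lim; auto.
  - eapply filterlim_ext; [|apply (rsum_lim c d Psi); auto].
    intros n; simpl. symmetry; apply Hn.
Qed.

End Gen.


Lemma plus_minus_mid {G : AbelianGroup} (a y b : G) : minus (plus a (plus y b)) y = plus a b.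
Proof.
  unfold minus. rewrite (plus_comm y b), plus_assoc, <- (plus_assoc (plus a b)), plus_opp_r, plus_zero_r.
  reflexivity.
Qed.

Definition rcont_on al be (g : R -> R) := forall t eps, al <= t <= be -> 0 < eps ->
  exists d, 0 < d /\ forall s, al <= s <= be -> Rabs (s - t) < d -> Rabs (g s - g t) < eps.

Lemma rcont_id al be : rcont_on al be (fun x => x).
Proof. intros t eps _ He. exists eps; split; auto. Qed.
Lemma rcont_const al be c : rcont_on al be (fun _ => c).
Proof. intros t eps _ He. exists 1; split; [lra|]. intros. rewrite Rminus_eq_0, Rabs_R0; auto. Qed.

Section Gen.
Context {Z : CompleteNormedModule R_AbsRing}.

Lemma cont2_snd al be (F : R -> R -> Z) t : cont2 al be F -> al <= t <= be -> cont_on al be (F t).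
Proof.
  intros H Ht x eps Hx He. destruct (H t x eps Ht Hx He) as [d [Hd Hd']].
  exists d; split; auto. intros s Hs Hsx. apply Hd'; auto. rewrite Rminus_eq_0, Rabs_R0; auto.
Qed.

Lemma cont2_swap al be (F : R -> R -> Z) : cont2 al be F -> cont2 al be (fun x y => F y x).
Proof.
  intros H x y eps Hx Hy He. destruct (H y x eps Hy Hx He) as [d [Hd Hd']].
  exists d; split; auto.
Qed.

Lemma norm_RInt_bound (f : R -> Z) a b M : ex_RInt f a b ->
  (forall x, Rmin a b <= x <= Rmax a b -> norm (f x) <= M) -> norm (RInt f a b) <= Rabs (b - a) * M.
Proof.
  intros Hex H. apply (@norm_RInt_le_const_abs Z f a b (RInt f a b) M H).
  apply (@RInt_correct Z); exact Hex.
Qed.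

Lemma PC al be (F : R -> R -> Z) (lo hi : R -> R) : al <= be -> cont2 al be F ->
  rcont_on al be lo -> rcont_on al be hi ->
  (forall t, al <= t <= be -> al <= lo t <= be /\ al <= hi t <= be) ->
  cont_on al be (fun t => RInt (F t) (lo t) (hi t)).
Proof.
  intros Hab HF Hlo Hhi Hin t eps Ht He.
  destruct (bound2 al be F Hab HF) as [M [HM0 HM]].
  set (e1 := eps / (3 * (be - al + 1))).
  set (e2 := eps / (3 * (M + 1))).
  assert (He1 : 0 < e1) by (unfold e1; apply Rdiv_lt_0_compat; lra).
  assert (He2 : 0 < e2) by (unfold e2; apply Rdiv_lt_0_compat; lra).
  destruct (UC2 al be F HF e1 He1) as [d1 [Hd1 Hu]].
  destruct (Hlo t e2 Ht He2) as [d2 [Hd2 Hl]].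
  destruct (Hhi t e2 Ht He2) as [d3 [Hd3 Hh]].
  exists (Rmin d1 (Rmin d2 d3)). split.
  { apply Rmin_pos; auto. apply Rmin_pos; auto. }
  intros s Hs Hst.
  assert (Hst1 : Rabs (s - t) < d1) by (eapply Rlt_le_trans; [exact Hst| apply Rmin_l]).
  assert (Hst2 : Rabs (s - t) < d2).
  { eapply Rlt_le_trans; [exact Hst|]. eapply Rle_trans; [apply Rmin_r| apply Rmin_l]. }
  assert (Hst3 : Rabs (s - t) < d3).
  { eapply Rlt_le_trans; [exact Hst|]. eapply Rle_trans; [apply Rmin_r| apply Rmin_r]. }
  destruct (Hin s Hs) as [Hls Hhs]. destruct (Hin t Ht) as [Hlt Hht].
  assert (HFs := cont2_snd al be F s HF Hs).
  assert (HFt := cont2_snd al be F t HF Ht).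
  assert (Ex : forall u v (g : R -> Z), cont_on al be g -> al <= u <= be -> al <= v <= be -> ex_RInt g u v).
  { intros u v g Hg Hu' Hv'. apply (EXI al be); auto. }
  eapply Rle_lt_trans; [apply (norm_minus_tri _ (RInt (F t) (lo s) (hi s)))|].
  assert (H1 : norm (minus (RInt (F s) (lo s) (hi s)) (RInt (F t) (lo s) (hi s))) <= (be - al) * e1).
  { rewrite <- (@RInt_minus Z) by (apply Ex; auto).
    eapply Rle_trans; [apply norm_RInt_bound|].
    - apply (@ex_RInt_minus Z); apply Ex; auto.
    - intros x Hx. left. apply (Hu t x s x); auto.
      + unfold Rmin, Rmax in Hx; destruct Rle_dec in Hx; lra.
      + unfold Rmin, Rmax in Hx; destruct Rle_dec in Hx; lra.
      + auto.
      + rewrite Rminus_eq_0, Rabs_R0; auto.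
    - apply Rmult_le_compat_r; [lra|]. unfold Rabs; destruct Rcase_abs; lra. }
  assert (H2 : norm (minus (RInt (F t) (lo s) (hi s)) (RInt (F t) (lo t) (hi t)))
              <= Rabs (lo t - lo s) * M + Rabs (hi s - hi t) * M).
  { rewrite <- (@RInt_Chasles Z (F t) (lo s) (lo t) (hi s)) by (apply Ex; auto).
    rewrite <- (@RInt_Chasles Z (F t) (lo t) (hi t) (hi s)) by (apply Ex; auto).
    rewrite (@plus_minus_mid Z).
    eapply Rle_trans; [apply (@norm_triangle R_AbsRing Z)|].
    apply Rplus_le_compat; apply norm_RInt_bound; try (apply Ex; auto);
      intros x Hx; apply HM; auto; unfold Rmin, Rmax in Hx; destruct Rle_dec in Hx; lra. }
  assert (Rabs (lo t - lo s) < e2) by (rewrite Rabs_minus_sym; apply Hl; auto).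
  assert (Rabs (hi s - hi t) < e2) by (apply Hh; auto).
  assert ((be - al) * e1 < eps / 3).
  { unfold e1. apply Rmult_lt_reg_r with (3 * (be - al + 1)); [lra|].
    replace ((be - al) * (eps / (3 * (be - al + 1))) * (3 * (be - al + 1))) with ((be - al) * eps)
      by (field; lra).
    replace (eps / 3 * (3 * (be - al + 1))) with ((be - al) * eps + eps) by (field; lra). lra. }
  assert (Rabs (lo t - lo s) * M + Rabs (hi s - hi t) * M <= 2 * e2 * M).
  { pose proof (Rabs_pos (lo t - lo s)); pose proof (Rabs_pos (hi s - hi t)). nra. }
  assert (2 * e2 * M < 2 * eps / 3).
  { unfold e2. apply Rmult_lt_reg_r with (3 * (M + 1)); [lra|].
    replace (2 * (eps / (3 * (M + 1))) * M * (3 * (M + 1))) with (2 * eps * M) by (field; lra).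
    replace (2 * eps / 3 * (3 * (M + 1))) with (2 * eps * M + 2 * eps) by (field; lra). lra. }
  lra.
Qed.

End Gen.


Lemma minus_minus_swap {G : AbelianGroup} (a b c d : G) :
  minus (minus a b) (minus c d) = minus (minus a c) (minus b d).
Proof.
  unfold minus at 1 4. rewrite !opp_minus. unfold minus.
  rewrite <- !plus_assoc. f_equal. rewrite (plus_comm d), (plus_comm d), !plus_assoc. f_equal. apply plus_comm.
Qed.
Lemma minus_plus_l {G : AbelianGroup} (a b : G) : minus (plus a b) a = b.
Proof.
  rewrite (plus_comm a b). unfold minus. rewrite <- plus_assoc. fold (minus a a). rewrite minus_eq_zero. apply plus_zero_r.
Qed.
Lemma minus_plus_assoc {G : AbelianGroup} (a b c : G) : minus (plus a b) c = plus b (minus a c).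
Proof.
  unfold minus. rewrite (plus_comm a b), plus_assoc. reflexivity.
Qed.

Section Gen.
Context {Z : CompleteNormedModule R_AbsRing}.

Lemma chasles_minus (f : R -> Z) a b c : ex_RInt f a b -> ex_RInt f b c ->
  minus (RInt f a c) (RInt f a b) = RInt f b c.
Proof.
  intros H1 H2. rewrite <- (@RInt_Chasles Z f a b c H1 H2). apply (@minus_plus_l Z).
Qed.

Lemma ZERO (H : R -> Z) al be : al <= be -> H al = zero ->
  (forall eps, 0 < eps -> exists d, 0 < d /\ forall t t', al <= t -> t <= t' -> t' <= be ->
     t' - t < d -> norm (minus (H t') (H t)) <= eps * (t' - t)) ->
  forall t, al <= t <= be -> H t = zero.
Proof.
  intros Hab H0 Hinc t Ht. apply (@eqc_n Z). intros eps He.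
  rewrite (@minus_zero_r Z).
  set (e1 := eps / (be - al + 1)).
  assert (He1 : 0 < e1) by (unfold e1; apply Rdiv_lt_0_compat; lra).
  destruct (Hinc e1 He1) as [d [Hd Hd']].
  destruct (nat_big ((t - al) / d)) as [N [HN _]].
  assert (HSN : 0 < INR (S N)) by (apply lt_0_INR; lia).
  assert (Hh : hstep al t N < d).
  { unfold hstep. apply Rmult_lt_reg_r with (INR (S N)); auto.
    replace ((t - al) / INR (S N) * INR (S N)) with (t - al) by (field; lra).
    assert (INR N <= INR (S N)) by (apply le_INR; lia).
    assert ((t - al) / d * d = t - al) by (field; lra).
    assert ((t - al) / d * d < INR (S N) * d) by (apply Rmult_lt_compat_r; lra). lra. }
  assert (Hh0 := hstep_pos al t N ltac:(lra)).
  assert (Hk : forall k, (k <= S N)%nat -> norm (H (rpt al t N k)) <= e1 * (rpt al t N k - al)).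
  { induction k; intros Hkn.
    - rewrite rpt_0, H0, Rminus_eq_0, Rmult_0_r. right. exact (@norm_zero R_AbsRing Z).
    - assert (IH := IHk ltac:(lia)).
      assert (Hin1 := rpt_in al t N k ltac:(lra) ltac:(lia)).
      assert (Hin2 := rpt_in al t N (S k) ltac:(lra) Hkn).
      rewrite rpt_S in Hin2 |- *.
      assert (norm (minus (H (rpt al t N k + hstep al t N)) (H (rpt al t N k)))
              <= e1 * (rpt al t N k + hstep al t N - rpt al t N k)).
      { apply Hd'; lra. }
      replace (H (rpt al t N k + hstep al t N)) with
        (plus (minus (H (rpt al t N k + hstep al t N)) (H (rpt al t N k))) (H (rpt al t N k))).
      2: { unfold minus. rewrite <- (@plus_assoc Z), (@plus_opp_l Z), (@plus_zero_r Z). reflexivity. }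
      eapply Rle_trans; [apply (@norm_triangle R_AbsRing Z)|]. lra. }
  specialize (Hk (S N) (le_n _)). rewrite rpt_end in Hk.
  eapply Rle_trans; [exact Hk|]. unfold e1.
  replace (eps / (be - al + 1) * (t - al)) with (eps * ((t - al) / (be - al + 1))) by (field; lra).
  assert ((t - al) / (be - al + 1) <= 1).
  { apply Rmult_le_reg_r with (be - al + 1); [lra|].
    replace ((t - al) / (be - al + 1) * (be - al + 1)) with (t - al) by (field; lra). lra. }
  rewrite <- (Rmult_1_r eps) at 2. apply Rmult_le_compat_l; lra.
Qed.

End Gen.


Lemma minus_plus_assoc2 {G : AbelianGroup} (a b c : G) : minus (plus a b) c = plus a (minus b c).
Proof. unfold minus. rewrite plus_assoc. reflexivity. Qed.

Ltac exi0 a := apply (EXI 0 a); [lra | lra | ].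
Section Gen.
Context {Z : CompleteNormedModule R_AbsRing}.

Lemma cont_on_scal a b (f : R -> Z) k : cont_on a b f -> cont_on a b (fun x => scal k (f x)).
Proof.
  intros Hf t eps Ht He. destruct (Hf t (eps / (Rabs k + 1)) Ht) as [d [Hd Hd']].
  { apply Rdiv_lt_0_compat; auto. pose proof (Rabs_pos k); lra. }
  exists d; split; auto. intros s Hs Hst.
  rewrite <- (@scal_minus_distr_l _ Z).
  eapply Rle_lt_trans; [apply (@norm_scal R_AbsRing Z)|].
  specialize (Hd' s Hs Hst). pose proof (Rabs_pos k).
  change (abs k) with (Rabs k).
  apply Rle_lt_trans with (Rabs k * (eps / (Rabs k + 1))).
  { apply Rmult_le_compat_l; [lra | left; exact Hd']. }
  apply Rmult_lt_reg_r with (Rabs k + 1); [lra|].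
  replace (Rabs k * (eps / (Rabs k + 1)) * (Rabs k + 1)) with (Rabs k * eps) by (field; lra).
  nra.
Qed.

Lemma TF a (F : R -> R -> Z) : 0 <= a -> cont2 0 a F -> forall t, 0 <= t <= a ->
  RInt (fun s => RInt (fun r => F r s) 0 s) 0 t = RInt (fun r => RInt (fun s => F r s) r t) 0 t.
Proof.
  intros Ha HF.
  set (I1 := fun s => RInt (fun r => F r s) 0 s).
  set (J := fun c r => RInt (fun s => F r s) r c).
  assert (HI1 : cont_on 0 a I1).
  { apply (PC 0 a (fun s r => F r s) (fun _ => 0) (fun s => s));
      [exact Ha | apply cont2_swap; exact HF | apply rcont_const | apply rcont_id | intros; lra]. }
  assert (HJ : forall c, 0 <= c <= a -> cont_on 0 a (J c)).
  { intros c Hc. apply (PC 0 a F (fun r => r) (fun _ => c));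
      [exact Ha | exact HF | apply rcont_id | apply rcont_const | intros; lra]. }
  assert (HK : forall u v, 0 <= u <= a -> 0 <= v <= a -> cont_on 0 a (fun r => RInt (F r) u v)).
  { intros u v Hu Hv. apply (PC 0 a F (fun _ => u) (fun _ => v));
      [exact Ha | exact HF | apply rcont_const | apply rcont_const | intros; lra]. }
  assert (HFr : forall r, 0 <= r <= a -> cont_on 0 a (F r)) by (intros; apply cont2_snd; auto).
  assert (HFs : forall s, 0 <= s <= a -> cont_on 0 a (fun r => F r s))
    by (intros s Hs; exact (cont2_snd 0 a (fun x y => F y x) s (cont2_swap 0 a F HF) Hs)).
  set (H := fun t => minus (RInt I1 0 t) (RInt (J t) 0 t)).
  assert (Hz : forall t, 0 <= t <= a -> H t = zero).
  { apply (ZERO H 0 a Ha).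
    { unfold H. rewrite !(@RInt_point Z). apply (@minus_eq_zero Z). }
    intros eps He.
    destruct (bound2 0 a F Ha HF) as [M [HM0 HM]].
    destruct (UC1 0 a I1 HI1 (eps / 3)) as [d1 [Hd1 Hu1]]; [lra|].
    destruct (UC2 0 a F HF (eps / (3 * (a + 1)))) as [d2 [Hd2 Hu2]].
    { apply Rdiv_lt_0_compat; lra. }
    set (d3 := eps / (3 * (M + 1))).
    assert (Hd3 : 0 < d3) by (unfold d3; apply Rdiv_lt_0_compat; lra).
    exists (Rmin d1 (Rmin d2 d3)). split.
    { apply Rmin_pos; auto. apply Rmin_pos; auto. }
    intros t t' Ht0 Htt Ht'a Hh.
    set (h := t' - t) in *. assert (Hhd : h = t' - t) by reflexivity. clearbody h.
    assert (Hh1 : h < d1) by (eapply Rlt_le_trans; [exact Hh| apply Rmin_l]).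
    assert (Hh2 : h < d2).
    { eapply Rlt_le_trans; [exact Hh|]. eapply Rle_trans; [apply Rmin_r| apply Rmin_l]. }
    assert (Hh3 : h < d3).
    { eapply Rlt_le_trans; [exact Hh|]. eapply Rle_trans; [apply Rmin_r| apply Rmin_r]. }
    assert (Hh0 : 0 <= h) by lra.
    set (X := scal h (I1 t)).
    assert (A1 : norm (minus (minus (RInt I1 0 t') (RInt I1 0 t)) X) <= h * (eps / 3)).
    { rewrite (chasles_minus I1 0 t t') by (apply (EXI 0 a); auto; lra).
      unfold X. replace (scal h (I1 t)) with (RInt (fun _ => I1 t) t t')
        by (rewrite (@RInt_const Z), Hhd; reflexivity).
      rewrite <- (@RInt_minus Z) by (try apply (@ex_RInt_const Z); apply (EXI 0 a); auto; lra).
      eapply Rle_trans; [apply norm_RInt_bound|].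
      - apply (@ex_RInt_minus Z); [apply (EXI 0 a); auto; lra| apply (@ex_RInt_const Z)].
      - intros x Hx. left. apply Hu1.
        + lra.
        + unfold Rmin, Rmax in Hx; destruct Rle_dec in Hx; lra.
        + unfold Rmin, Rmax in Hx; destruct Rle_dec in Hx; rewrite Rabs_pos_eq; lra.
      - right. rewrite Rabs_pos_eq by lra. rewrite Hhd; reflexivity. }
    assert (A2 : norm (minus (minus (RInt (J t') 0 t') (RInt (J t) 0 t)) X)
                 <= h * (h * M) + t * (h * (eps / (3 * (a + 1))))).
    { rewrite <- (@RInt_Chasles Z (J t') 0 t t') by (exi0 a; apply HJ; lra).
      rewrite (@minus_plus_assoc Z).
      rewrite <- (@RInt_minus Z) by (exi0 a; apply HJ; lra).
      rewrite (@RInt_ext Z (fun r => minus (J t' r) (J t r)) (fun r => RInt (F r) t t')).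
      2: { intros r Hr. unfold J. rewrite Rmin_left, Rmax_right in Hr by lra.
           apply chasles_minus; exi0 a; apply HFr; lra. }
      unfold X, I1. rewrite <- (@RInt_scal Z) by (exi0 a; apply HFs; lra).
      rewrite (@minus_plus_assoc2 Z).
      rewrite <- (@RInt_minus Z) by (exi0 a; first [apply HK; lra | apply cont_on_scal; apply HFs; lra]).
      eapply Rle_trans; [apply (@norm_triangle R_AbsRing Z)|]. apply Rplus_le_compat.
      - eapply Rle_trans; [apply (norm_RInt_bound _ _ _ (h * M))|].
        + exi0 a; apply HJ; lra.
        + intros r Hr. rewrite Rmin_left, Rmax_right in Hr by lra. unfold J.
          eapply Rle_trans; [apply norm_RInt_bound|].
          * exi0 a; apply HFr; lra.
          * intros s Hs. apply HM; [lra|]. unfold Rmin, Rmax in Hs; destruct Rle_dec in Hs; lra.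
          * apply Rmult_le_compat_r; auto. rewrite Rabs_pos_eq by lra. lra.
        + rewrite Rabs_pos_eq by lra. rewrite Hhd. lra.
      - eapply Rle_trans; [apply (norm_RInt_bound _ _ _ (h * (eps / (3 * (a + 1)))))|].
        + apply (@ex_RInt_minus Z); [exi0 a; apply HK; lra | exi0 a; apply cont_on_scal; apply HFs; lra].
        + intros r Hr. rewrite Rmin_left, Rmax_right in Hr by lra.
          replace (scal h (F r t)) with (RInt (fun _ => F r t) t t')
            by (rewrite (@RInt_const Z), Hhd; reflexivity).
          rewrite <- (@RInt_minus Z) by (try apply (@ex_RInt_const Z); exi0 a; apply HFr; lra).
          eapply Rle_trans; [apply norm_RInt_bound|].
          * apply (@ex_RInt_minus Z); [exi0 a; apply HFr; lra| apply (@ex_RInt_const Z)].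
          * intros s Hs. rewrite Rmin_left, Rmax_right in Hs by lra.
            left. apply Hu2; try lra.
            -- rewrite Rminus_eq_0, Rabs_R0; lra.
            -- rewrite Rabs_pos_eq; lra.
          * rewrite Rabs_pos_eq by lra. rewrite Hhd. right; reflexivity.
        + rewrite Rabs_pos_eq by lra. rewrite Rminus_0_r. right; reflexivity. }
    unfold H. rewrite (@minus_minus_swap Z).
    eapply Rle_trans; [apply (norm_minus_tri _ X)|].
    rewrite (norm_minus_sym X).
    assert (F1 : h * M <= eps / 3).
    { apply Rle_trans with (d3 * M). apply Rmult_le_compat_r; lra.
      unfold d3. apply Rmult_le_reg_r with (3 * (M + 1)); [lra|].
      replace (eps / (3 * (M + 1)) * M * (3 * (M + 1))) with (eps * M) by (field; lra).
      replace (eps / 3 * (3 * (M + 1))) with (eps * M + eps) by (field; lra). lra. }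
    assert (F2 : t * (eps / (3 * (a + 1))) <= eps / 3).
    { apply Rmult_le_reg_r with (3 * (a + 1)); [lra|].
      replace (t * (eps / (3 * (a + 1))) * (3 * (a + 1))) with (t * eps) by (field; lra).
      replace (eps / 3 * (3 * (a + 1))) with (a * eps + eps) by (field; lra).
      assert (t * eps <= a * eps) by (apply Rmult_le_compat_r; lra). lra. }
    assert (h * (h * M) <= h * (eps / 3)) by (apply Rmult_le_compat_l; lra).
    assert (t * (h * (eps / (3 * (a + 1)))) <= h * (eps / 3)).
    { replace (t * (h * (eps / (3 * (a + 1))))) with (h * (t * (eps / (3 * (a + 1))))) by ring.
      apply Rmult_le_compat_l; lra. }
    lra. }
  intros t Ht. specialize (Hz t Ht). unfold H in Hz.
  change (RInt I1 0 t = RInt (J t) 0 t).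
  apply (@eqc_n Z). intros eps He. rewrite Hz. replace (norm _) with 0; [lra|]. symmetry. exact (@norm_zero R_AbsRing Z).
Qed.

End Gen.


Lemma plus_minus_r {G : AbelianGroup} (x y : G) : plus (minus x y) y = x.
Proof. unfold minus. rewrite <- plus_assoc, plus_opp_l. apply plus_zero_r. Qed.
Lemma minus_plus_r {G : AbelianGroup} (x y : G) : minus (plus x y) y = x.
Proof. unfold minus. rewrite <- plus_assoc. fold (minus y y). rewrite minus_eq_zero. apply plus_zero_r. Qed.
Lemma alg1 {G : AbelianGroup} (x y z w : G) : x = plus (plus y z) w -> z = minus (minus x y) w.
Proof.
  intros ->. rewrite (plus_comm y z), <- plus_assoc, (plus_comm y w), plus_assoc.
  rewrite minus_plus_r. rewrite minus_plus_r. reflexivity.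
Qed.
Lemma alg2 {G : AbelianGroup} (x y w : G) : plus (plus zero (minus (minus x y) w)) (plus w y) = x.
Proof. rewrite plus_zero_l, plus_assoc, plus_minus_r. apply plus_minus_r. Qed.

Section Gen.
Context {Z : CompleteNormedModule R_AbsRing}.

Definition opfam (a : R) (b : R -> Z -> Z) :=
  (forall s, 0 <= s <= a -> is_linear (b s)) /\
  (forall s0 x0 eps, 0 <= s0 <= a -> 0 < eps -> exists d, 0 < d /\
     forall s x, 0 <= s <= a -> Rabs (s - s0) < d -> norm (minus x x0) < d ->
       norm (minus (b s x) (b s0 x0)) < eps).

Definition DRel (D : Z -> Prop) (A : Z -> Z) (b l : R -> Z -> Z) (a0 a1 : R) (u f : R -> Z) :=
  forall t, a0 <= t <= a1 ->
    D (RInt (fun s => b s (u s)) a0 t) /\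
    u t = plus (plus (u a0) (A (RInt (fun s => b s (u s)) a0 t)))
               (RInt (fun s => plus (l s (u s)) (f s)) a0 t).

Lemma norm_minus_le (p q : Z) : norm (minus p q) <= norm p + norm q.
Proof.
  unfold minus. eapply Rle_trans; [apply (@norm_triangle R_AbsRing Z)|].
  rewrite (@norm_opp R_AbsRing Z). lra.
Qed.

Lemma cont_on_plus a b (f g : R -> Z) : cont_on a b f -> cont_on a b g ->
  cont_on a b (fun x => plus (f x) (g x)).
Proof.
  intros Hf Hg t eps Ht He.
  destruct (Hf t (eps/2) Ht) as [d1 [Hd1 H1]]; [lra|].
  destruct (Hg t (eps/2) Ht) as [d2 [Hd2 H2]]; [lra|].
  exists (Rmin d1 d2); split; [apply Rmin_pos; auto|]. intros s Hs Hst.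
  rewrite (@minus_plus_plus Z).
  eapply Rle_lt_trans; [apply (@norm_triangle R_AbsRing Z)|].
  assert (norm (minus (f s) (f t)) < eps/2) by (apply H1; auto; eapply Rlt_le_trans; [exact Hst| apply Rmin_l]).
  assert (norm (minus (g s) (g t)) < eps/2) by (apply H2; auto; eapply Rlt_le_trans; [exact Hst| apply Rmin_r]).
  lra.
Qed.

Lemma cont_on_minus a b (f g : R -> Z) : cont_on a b f -> cont_on a b g ->
  cont_on a b (fun x => minus (f x) (g x)).
Proof.
  intros Hf Hg t eps Ht He.
  destruct (Hf t (eps/2) Ht) as [d1 [Hd1 H1]]; [lra|].
  destruct (Hg t (eps/2) Ht) as [d2 [Hd2 H2]]; [lra|].
  exists (Rmin d1 d2); split; [apply Rmin_pos; auto|]. intros s Hs Hst.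
  rewrite (@minus_minus_swap Z).
  eapply Rle_lt_trans; [apply norm_minus_le|].
  assert (norm (minus (f s) (f t)) < eps/2) by (apply H1; auto; eapply Rlt_le_trans; [exact Hst| apply Rmin_l]).
  assert (norm (minus (g s) (g t)) < eps/2) by (apply H2; auto; eapply Rlt_le_trans; [exact Hst| apply Rmin_r]).
  lra.
Qed.

Lemma cont2_diag a (W : R -> R -> Z) : cont2 0 a W -> cont_on 0 a (fun s => W s s).
Proof.
  intros H t eps Ht He. destruct (H t t eps Ht Ht He) as [d [Hd Hd']].
  exists d; split; auto.
Qed.

Lemma cont2_fst a (W : R -> R -> Z) t : cont2 0 a W -> 0 <= t <= a -> cont_on 0 a (fun r => W r t).
Proof. intros H Ht. exact (cont2_snd 0 a (fun x y => W y x) t (cont2_swap 0 a W H) Ht). Qed.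

Lemma cont2_op a b (W : R -> R -> Z) : opfam a b -> cont2 0 a W -> cont2 0 a (fun r s => b s (W r s)).
Proof.
  intros [_ Hb] HW x y eps Hx Hy He.
  destruct (Hb y (W x y) eps Hy He) as [d1 [Hd1 H1]].
  destruct (HW x y d1 Hx Hy Hd1) as [d2 [Hd2 H2]].
  exists (Rmin d1 d2); split; [apply Rmin_pos; auto|].
  intros x' y' Hx' Hy' Hxx Hyy. apply H1; auto.
  - eapply Rlt_le_trans; [exact Hyy| apply Rmin_l].
  - apply H2; [exact Hx' | exact Hy' | eapply Rlt_le_trans; [exact Hxx| apply Rmin_r] | eapply Rlt_le_trans; [exact Hyy | apply Rmin_r]].
Qed.

Lemma cont_on_op a b (u : R -> Z) : opfam a b -> cont_on 0 a u -> cont_on 0 a (fun s => b s (u s)).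
Proof.
  intros Hb Hu.
  assert (H2 : cont2 0 a (fun r s => b s (u s))).
  { apply (cont2_op a b (fun _ s => u s) Hb).
    intros x y e Hx Hy He. destruct (Hu y e Hy He) as [d [Hd Hd']].
    exists d; split; auto. }
  intros t eps Ht He. destruct (H2 t t eps Ht Ht He) as [d [Hd Hd']].
  exists d; split; auto. intros s Hs Hst. apply (Hd' s s Hs Hs Hst Hst).
Qed.

End Gen.


Section Gen.
Context {Z : CompleteNormedModule R_AbsRing}.

Lemma FD (D : Z -> Prop) A a (b l : R -> Z -> Z) (W : R -> R -> Z) :
  closed_op D A -> 0 <= a -> opfam a b -> opfam a l -> cont2 0 a W ->
  (forall r t, 0 <= r -> r <= t -> t <= a ->
     D (RInt (fun s => b s (W r s)) r t) /\
     W r t = plus (plus (W r r) (A (RInt (fun s => b s (W r s)) r t)))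
                  (RInt (fun s => l s (W r s)) r t)) ->
  cont_on 0 a (fun t => RInt (fun r => W r t) 0 t) /\
  DRel D A b l 0 a (fun t => RInt (fun r => W r t) 0 t) (fun s => W s s).
Proof.
  intros HA Ha Hb Hl HW Hk.
  set (v := fun t => RInt (fun r => W r t) 0 t).
  assert (Hv : cont_on 0 a v).
  { apply (PC 0 a (fun t r => W r t) (fun _ => 0) (fun t => t));
      [exact Ha | apply cont2_swap; exact HW | apply rcont_const | apply rcont_id | intros; lra]. }
  assert (HbW := cont2_op a b W Hb HW).
  assert (HlW := cont2_op a l W Hl HW).
  split; [exact Hv|].
  intros t Ht.
  assert (E1 : RInt (fun s => b s (v s)) 0 t = RInt (fun r => RInt (fun s => b s (W r s)) r t) 0 t).
  { transitivity (RInt (fun s => RInt (fun r => b s (W r s)) 0 s) 0 t).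
    - apply (@RInt_ext Z). intros s Hs. rewrite Rmin_left, Rmax_right in Hs by lra.
      unfold v. apply LC.
      + apply (proj1 Hb); lra.
      + lra.
      + apply (cont_on_sub 0 a); [apply cont2_fst; auto; lra | lra | lra].
    - exact (TF a (fun r s => b s (W r s)) Ha HbW t Ht). }
  assert (E2 : RInt (fun s => l s (v s)) 0 t = RInt (fun r => RInt (fun s => l s (W r s)) r t) 0 t).
  { transitivity (RInt (fun s => RInt (fun r => l s (W r s)) 0 s) 0 t).
    - apply (@RInt_ext Z). intros s Hs. rewrite Rmin_left, Rmax_right in Hs by lra.
      unfold v. apply LC.
      + apply (proj1 Hl); lra.
      + lra.
      + apply (cont_on_sub 0 a); [apply cont2_fst; auto; lra | lra | lra].
    - exact (TF a (fun r s => l s (W r s)) Ha HlW t Ht). }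
  set (Phi := fun r => RInt (fun s => b s (W r s)) r t).
  set (Lam := fun r => RInt (fun s => l s (W r s)) r t).
  set (Psi := fun r => minus (minus (W r t) (W r r)) (Lam r)).
  assert (HPhi : cont_on 0 a Phi).
  { apply (PC 0 a (fun r s => b s (W r s)) (fun r => r) (fun _ => t));
      [exact Ha | exact HbW | apply rcont_id | apply rcont_const | intros; lra]. }
  assert (HLam : cont_on 0 a Lam).
  { apply (PC 0 a (fun r s => l s (W r s)) (fun r => r) (fun _ => t));
      [exact Ha | exact HlW | apply rcont_id | apply rcont_const | intros; lra]. }
  assert (HPsi : cont_on 0 a Psi).
  { apply cont_on_minus; [apply cont_on_minus|]; auto.
    - apply cont2_fst; auto.
    - apply cont2_diag; auto. }
  assert (HCI : D (RInt Phi 0 t) /\ A (RInt Phi 0 t) = RInt Psi 0 t).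
  { apply CI; auto; try lra.
    - apply (cont_on_sub 0 a); auto; lra.
    - apply (cont_on_sub 0 a); auto; lra.
    - intros r Hr. destruct (Hk r t ltac:(lra) ltac:(lra) ltac:(lra)) as [Hk1 Hk2].
      split; [exact Hk1|]. unfold Psi, Lam. apply (@alg1 Z). exact Hk2. }
  destruct HCI as [HCI1 HCI2].
  rewrite E1. split; [exact HCI1|].
  change (RInt (fun r => RInt (fun s => b s (W r s)) r t) 0 t) with (RInt Phi 0 t).
  rewrite HCI2.
  assert (Hex : forall (g : R -> Z), cont_on 0 a g -> ex_RInt g 0 t)
    by (intros g Hg; apply (EXI 0 a); auto; lra).
  unfold Psi. rewrite (@RInt_minus Z).
  2: { apply Hex. apply cont_on_minus; [apply cont2_fst; auto| apply cont2_diag; auto]. }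
  2: { apply Hex; auto. }
  rewrite (@RInt_minus Z).
  2: { apply Hex. apply cont2_fst; auto. }
  2: { apply Hex. apply cont2_diag; auto. }
  rewrite (@RInt_plus Z).
  2: { apply Hex. apply cont_on_op; auto. }
  2: { apply Hex. apply cont2_diag; auto. }
  rewrite E2.
  change (RInt (fun r => RInt (fun s => l s (W r s)) r t) 0 t) with (RInt Lam 0 t).
  assert (Hv0 : v 0 = zero) by (unfold v; apply (@RInt_point Z)).
  rewrite Hv0.
  symmetry. apply (@alg2 Z).
Qed.

End Gen.


Lemma minus_opp_opp {G : AbelianGroup} (u v : G) : minus (opp u) (opp v) = opp (minus u v).
Proof.
  rewrite opp_minus. unfold minus. rewrite opp_opp. apply plus_comm.
Qed.

Lemma plus_minus_l {G : AbelianGroup} (x y : G) : plus y (minus x y) = x.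
Proof. rewrite plus_comm. apply plus_minus_r. Qed.

Lemma alg3 {G : AbelianGroup} (x y v0 p q p' q' : G) :
  x = plus (plus v0 p) q -> y = plus (plus v0 p') q' ->
  x = plus (plus y (minus p p')) (minus q q').
Proof.
  intros -> ->. symmetry.
  rewrite <- (plus_assoc (plus v0 p') q' (minus p p')), (plus_comm q' (minus p p')), plus_assoc,
    <- (plus_assoc v0 p' (minus p p')), plus_minus_l.
  rewrite <- (plus_assoc (plus v0 p) q' (minus q q')), plus_minus_l. reflexivity.
Qed.

Section Gen.
Context {Z : CompleteNormedModule R_AbsRing}.

Lemma CV (f : R -> Z) a p q : ex_RInt f (a - q) (a - p) ->
  RInt (fun x => f (a - x)) p q = RInt f (a - q) (a - p).
Proof.
  intros Hex.
  assert (H1 : is_RInt (fun y => scal (-1) (f (-1 * y + a))) p q (RInt f (-1 * p + a) (-1 * q + a))).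
  { apply (@is_RInt_comp_lin Z). apply (@RInt_correct Z).
    replace (-1 * p + a) with (a - p) by ring. replace (-1 * q + a) with (a - q) by ring.
    apply (@ex_RInt_swap Z); exact Hex. }
  apply (@is_RInt_opp Z) in H1.
  apply (@is_RInt_ext Z) with (g := fun x => f (a - x)) in H1.
  2: { intros x _. replace (-1 * x + a) with (a - x) by ring.
       rewrite <- (@scal_opp_l _ Z).
       match goal with |- scal ?k _ = _ => replace k with (one : R_AbsRing) end.
       apply (@scal_one _ Z). cbn. unfold one, opp; simpl. ring. }
  rewrite (@is_RInt_unique Z _ _ _ _ H1).
  replace (-1 * p + a) with (a - p) by ring. replace (-1 * q + a) with (a - q) by ring.
  apply (@opp_RInt_swap Z). apply (@ex_RInt_swap Z); exact Hex.
Qed.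

Lemma SHIFT (f : R -> Z) r p q : ex_RInt f (p + r) (q + r) ->
  RInt (fun y => f (y + r)) p q = RInt f (p + r) (q + r).
Proof.
  intros Hex.
  assert (H1 : is_RInt (fun y => scal 1 (f (1 * y + r))) p q (RInt f (1 * p + r) (1 * q + r))).
  { apply (@is_RInt_comp_lin Z). apply (@RInt_correct Z).
    replace (1 * p + r) with (p + r) by ring. replace (1 * q + r) with (q + r) by ring. exact Hex. }
  apply (@is_RInt_ext Z) with (g := fun y => f (y + r)) in H1.
  2: { intros x _. replace (1 * x + r) with (x + r) by ring. apply (@scal_one _ Z). }
  rewrite (@is_RInt_unique Z _ _ _ _ H1).
  replace (1 * p + r) with (p + r) by ring. replace (1 * q + r) with (q + r) by ring. reflexivity.
Qed.

Lemma closed_minus (D : Z -> Prop) A x y : closed_op D A -> D x -> D y ->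
  D (minus x y) /\ A (minus x y) = minus (A x) (A y).
Proof.
  intros [H0 [Hp [Hs Hc]]] Hx Hy.
  assert (E : forall z : Z, opp z = scal (opp one : R_AbsRing) z)
    by (intros; symmetry; apply (@scal_opp_one _ Z)).
  assert (Eq : forall u v : Z, minus u v = plus u (scal (opp one : R_AbsRing) v))
    by (intros u v; rewrite <- E; reflexivity).
  rewrite !Eq.
  destruct (Hs (opp one) y Hy) as [Hs1 Hs2].
  destruct (Hp x _ Hx Hs1) as [Hp1 Hp2]. split; auto. transitivity (plus (A x) (A (scal (opp one : R_AbsRing) y))); [exact Hp2|]. f_equal. exact Hs2.
Qed.

Lemma closed_opp (D : Z -> Prop) A x : closed_op D A -> D x -> D (opp x) /\ A (opp x) = opp (A x).
Proof.
  intros [H0 [Hp [Hs Hc]]] Hx.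
  assert (E : forall z : Z, opp z = scal (opp one : R_AbsRing) z)
    by (intros; symmetry; apply (@scal_opp_one _ Z)).
  rewrite !E. apply Hs; auto.
Qed.

Lemma opfam_rev a b : opfam a b -> opfam a (fun t (x : Z) => opp (b (a - t) x)).
Proof.
  intros [Hl Hc]. split.
  - intros s Hs. assert (L := Hl (a - s) ltac:(lra)). constructor.
    + intros x y. rewrite (linear_plus _ L). apply (@opp_plus Z).
    + intros k x. rewrite (linear_scal _ L). symmetry; apply (@scal_opp_r _ Z).
    + destruct (linear_norm _ L) as [M [HM HM']]. exists M; split; auto.
      intros x. rewrite (@norm_opp R_AbsRing Z). apply HM'.
  - intros s0 x0 eps Hs0 He. destruct (Hc (a - s0) x0 eps ltac:(lra) He) as [d [Hd Hd']].
    exists d; split; auto. intros s x Hs Hss Hx.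
    rewrite (@minus_opp_opp Z), (@norm_opp R_AbsRing Z). apply Hd'; auto; [lra|].
    replace (a - s - (a - s0)) with (- (s - s0)) by ring. rewrite Rabs_Ropp; auto.
Qed.

Lemma cont2_rev a (V : R -> R -> Z) : cont2 0 a V -> cont2 0 a (fun r s => V (a - s) (a - r)).
Proof.
  intros H x y eps Hx Hy He. destruct (H (a - y) (a - x) eps ltac:(lra) ltac:(lra) He) as [d [Hd Hd']].
  exists d; split; auto. intros x' y' Hx' Hy' Hxx Hyy. apply Hd'; try lra.
  - replace (a - y' - (a - y)) with (- (y' - y)) by ring. rewrite Rabs_Ropp; auto.
  - replace (a - x' - (a - x)) with (- (x' - x)) by ring. rewrite Rabs_Ropp; auto.
Qed.

End Gen.


Section Gen.
Context {Z : CompleteNormedModule R_AbsRing}.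

Lemma cont_on_rev a (g : R -> Z) : cont_on 0 a g -> cont_on 0 a (fun s => g (a - s)).
Proof.
  intros H t eps Ht He. destruct (H (a - t) eps ltac:(lra) He) as [d [Hd Hd']].
  exists d; split; auto. intros s Hs Hst. apply Hd'; [lra|].
  replace (a - s - (a - t)) with (- (s - t)) by ring. rewrite Rabs_Ropp; auto.
Qed.

Lemma chasles_minus2 (f : R -> Z) x y z : ex_RInt f x y -> ex_RInt f y z ->
  minus (RInt f x z) (RInt f y z) = RInt f x y.
Proof.
  intros H1 H2. rewrite <- (@RInt_Chasles Z f x y z H1 H2). apply (@minus_plus_r Z).
Qed.

Lemma BD (D : Z -> Prop) A a (b l : R -> Z -> Z) (V : R -> R -> Z) :
  closed_op D A -> 0 <= a -> opfam a b -> opfam a l -> cont2 0 a V ->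
  (forall s t, 0 <= t -> t <= s -> s <= a ->
     D (RInt (fun r => b r (V r s)) 0 t) /\
     V t s = plus (plus (V 0 s) (A (RInt (fun r => b r (V r s)) 0 t)))
                  (RInt (fun r => l r (V r s)) 0 t)) ->
  cont_on 0 a (fun t => RInt (fun s => V t s) t a) /\
  DRel D A b l 0 a (fun t => RInt (fun s => V t s) t a) (fun r => opp (V r r)).
Proof.
  intros HA Ha Hb Hl HV Hk.
  assert (Hq : cont_on 0 a (fun t => RInt (fun s => V t s) t a)).
  { apply (PC 0 a V (fun t => t) (fun _ => a));
      [exact Ha | exact HV | apply rcont_id | apply rcont_const | intros; lra]. }
  split; [exact Hq|].
  assert (Hk' : forall r' t', 0 <= r' -> r' <= t' -> t' <= a ->
     D (RInt (fun s => (fun t x => opp (b (a - t) x)) s ((fun r s => V (a - s) (a - r)) r' s)) r' t') /\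
     (fun r s => V (a - s) (a - r)) r' t' =
       plus (plus ((fun r s => V (a - s) (a - r)) r' r')
         (A (RInt (fun s => (fun t x => opp (b (a - t) x)) s ((fun r s => V (a - s) (a - r)) r' s)) r' t')))
       (RInt (fun s => (fun t x => opp (l (a - t) x)) s ((fun r s => V (a - s) (a - r)) r' s)) r' t')).
  { intros r' t' Hr' Hrt Ht'. cbv beta.
    set (s := a - r'). set (t := a - t').
    assert (Hs : 0 <= s <= a) by (unfold s; lra). assert (Htt : 0 <= t <= s) by (unfold s, t; lra).
    assert (HVs : cont_on 0 a (fun r => V r s)) by (apply cont2_fst; auto).
    assert (Hfb : cont_on 0 a (fun r => b r (V r s))) by (apply cont_on_op; auto).
    assert (Hfl : cont_on 0 a (fun r => l r (V r s))) by (apply cont_on_op; auto).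
    assert (Eb : RInt (fun x => opp (b (a - x) (V (a - x) s))) r' t' =
                 minus (RInt (fun r => b r (V r s)) 0 t) (RInt (fun r => b r (V r s)) 0 s)).
    { rewrite (@RInt_opp Z).
      2: { apply (EXI 0 a); [lra|lra|]. exact (cont_on_rev a _ Hfb). }
      rewrite (CV (fun r => b r (V r s)) a r' t').
      2: { apply (EXI 0 a); [lra|lra|exact Hfb]. }
      fold t s. rewrite <- (chasles_minus _ 0 t s) by (apply (EXI 0 a); [lra|lra|exact Hfb]).
      apply (@opp_minus Z). }
    assert (El : RInt (fun x => opp (l (a - x) (V (a - x) s))) r' t' =
                 minus (RInt (fun r => l r (V r s)) 0 t) (RInt (fun r => l r (V r s)) 0 s)).
    { rewrite (@RInt_opp Z).
      2: { apply (EXI 0 a); [lra|lra|]. exact (cont_on_rev a _ Hfl). }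
      rewrite (CV (fun r => l r (V r s)) a r' t').
      2: { apply (EXI 0 a); [lra|lra|exact Hfl]. }
      fold t s. rewrite <- (chasles_minus _ 0 t s) by (apply (EXI 0 a); [lra|lra|exact Hfl]).
      apply (@opp_minus Z). }
    rewrite Eb, El.
    destruct (Hk s t ltac:(lra) ltac:(lra) ltac:(lra)) as [Dt Et].
    destruct (Hk s s ltac:(lra) ltac:(lra) ltac:(lra)) as [Ds Es].
    destruct (closed_minus D A _ _ HA Dt Ds) as [Dm Am].
    split; [exact Dm|]. rewrite Am.
    apply (@alg3 Z) with (v0 := V 0 s); auto. }
  destruct (FD D A a _ _ _ HA Ha (opfam_rev a b Hb) (opfam_rev a l Hl) (cont2_rev a V HV) Hk')
    as [Hv' HDR].
  set (q2 := fun t => RInt (fun s => V t s) t a) in *.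
  set (v' := fun t => RInt (fun r => (fun r s => V (a - s) (a - r)) r t) 0 t) in *.
  assert (Ev : forall t', 0 <= t' <= a -> v' t' = q2 (a - t')).
  { intros t' Ht'. unfold v', q2. cbv beta.
    rewrite (CV (fun s => V (a - t') s) a 0 t').
    - rewrite Rminus_0_r. reflexivity.
    - rewrite Rminus_0_r. apply (EXI 0 a); [lra|lra|]. apply cont2_snd; auto; lra. }
  assert (Hbq : cont_on 0 a (fun r => b r (q2 r))) by (apply cont_on_op; auto).
  assert (Hlq : cont_on 0 a (fun r => l r (q2 r))) by (apply cont_on_op; auto).
  assert (HVd : cont_on 0 a (fun r => V r r)) by (apply cont2_diag; auto).
  set (Qb := fun x => RInt (fun r => b r (q2 r)) x a).
  set (g := fun r => plus (opp (l r (q2 r))) (V r r)).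
  assert (Hg : cont_on 0 a g).
  { unfold g. apply cont_on_plus; auto.
    apply (cont_on_lin 0 a _ opp); auto.
    constructor.
    - intros; apply (@opp_plus Z).
    - intros; symmetry; apply (@scal_opp_r _ Z).
    - exists 1; split; [lra|]. intros. rewrite (@norm_opp R_AbsRing Z). lra. }
  set (Qf := fun x => RInt g x a).
  assert (Hx : forall x, 0 <= x <= a ->
     D (opp (Qb x)) /\ q2 x = plus (plus zero (A (opp (Qb x)))) (Qf x)).
  { intros x Hx. destruct (HDR (a - x) ltac:(lra)) as [H1 H2]. cbv beta in H1, H2.
    assert (Eb : RInt (fun s => (fun t x => opp (b (a - t) x)) s (v' s)) 0 (a - x) = opp (Qb x)).
    { cbv beta. rewrite (@RInt_ext Z _ (fun s => opp (b (a - s) (q2 (a - s))))).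
      2: { intros y Hy. rewrite Rmin_left, Rmax_right in Hy by lra. rewrite Ev by lra. reflexivity. }
      rewrite (@RInt_opp Z).
      2: { apply (EXI 0 a); [lra|lra|]. exact (cont_on_rev a _ Hbq). }
      rewrite (CV (fun r => b r (q2 r)) a 0 (a - x)).
      2: { apply (EXI 0 a); [lra|lra|exact Hbq]. }
      rewrite Rminus_0_r. replace (a - (a - x)) with x by ring. reflexivity. }
    assert (Ef : RInt (fun s => plus ((fun t x => opp (l (a - t) x)) s (v' s))
                   ((fun r s => V (a - s) (a - r)) s s)) 0 (a - x) = Qf x).
    { cbv beta. rewrite (@RInt_ext Z _ (fun s => g (a - s))).
      2: { intros y Hy. rewrite Rmin_left, Rmax_right in Hy by lra. rewrite Ev by lra. reflexivity. }
      rewrite (CV g a 0 (a - x)).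
      2: { apply (EXI 0 a); [lra|lra|exact Hg]. }
      rewrite Rminus_0_r. replace (a - (a - x)) with x by ring. reflexivity. }
    rewrite Eb in H1, H2. match type of H2 with context [RInt ?f 0 (a - x)] => replace (RInt f 0 (a - x)) with (Qf x) in H2 by (symmetry; exact Ef) end.
    assert (Hv0 : v' 0 = zero) by (unfold v'; apply (@RInt_point Z)).
    rewrite Hv0 in H2. rewrite Ev in H2 by lra. replace (a - (a - x)) with x in H2 by ring.
    split; auto. }
  intros t Ht.
  destruct (Hx t Ht) as [Dt Et]. destruct (Hx 0 ltac:(lra)) as [D0 E0].
  assert (EB : RInt (fun s => b s (q2 s)) 0 t = minus (opp (Qb t)) (opp (Qb 0))).
  { rewrite (@minus_opp_opp Z), (@opp_minus Z). unfold Qb.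
    symmetry. apply chasles_minus2; apply (EXI 0 a); auto; lra. }
  assert (EF : RInt (fun s => plus (l s (q2 s)) (opp (V s s))) 0 t = minus (Qf t) (Qf 0)).
  { assert (E' : forall x, 0 <= x <= a -> Qf x = opp (RInt (fun s => plus (l s (q2 s)) (opp (V s s))) x a)).
    { intros x Hx'. unfold Qf. rewrite <- (@RInt_opp Z).
      2: { apply (EXI 0 a); [lra|lra|]. apply cont_on_plus; auto.
           apply (cont_on_lin 0 a _ opp); auto. constructor.
           - intros; apply (@opp_plus Z).
           - intros; symmetry; apply (@scal_opp_r _ Z).
           - exists 1; split; [lra|]. intros. rewrite (@norm_opp R_AbsRing Z). lra. }
      apply (@RInt_ext Z). intros y _. unfold g. rewrite (@opp_plus Z), (@opp_opp Z). reflexivity. }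
    rewrite (E' t Ht), (E' 0 ltac:(lra)), (@minus_opp_opp Z), (@opp_minus Z).
    symmetry. apply chasles_minus2; apply (EXI 0 a); try lra.
    all: apply cont_on_plus; auto.
    all: apply (cont_on_lin 0 a _ opp); auto; constructor.
    all: try (intros; apply (@opp_plus Z)).
    all: try (intros; symmetry; apply (@scal_opp_r _ Z)).
    all: exists 1; split; [lra|]; intros; rewrite (@norm_opp R_AbsRing Z); lra. }
  rewrite EB, EF.
  destruct (closed_minus D A _ _ HA Dt D0) as [Dm Am].
  split; [exact Dm|]. rewrite Am.
  apply (@alg3 Z) with (v0 := zero); auto.
Qed.

End Gen.


Lemma plus_plus_swap {G : AbelianGroup} (a b c d : G) :
  plus (plus a b) (plus c d) = plus (plus a c) (plus b d).
Proof.
  rewrite <- !plus_assoc. f_equal. rewrite !plus_assoc. f_equal. apply plus_comm.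
Qed.

Section Gen.
Context {Z : CompleteNormedModule R_AbsRing}.

Lemma DRel_ext_u (D : Z -> Prop) A b l a0 a1 (u1 u2 f : R -> Z) :
  a0 <= a1 -> (forall t, a0 <= t <= a1 -> u1 t = u2 t) ->
  DRel D A b l a0 a1 u1 f -> DRel D A b l a0 a1 u2 f.
Proof.
  intros Ha Heq H t Ht. destruct (H t Ht) as [H1 H2].
  assert (E1 : RInt (fun s => b s (u2 s)) a0 t = RInt (fun s => b s (u1 s)) a0 t).
  { apply (@RInt_ext Z). intros x Hx. rewrite Rmin_left, Rmax_right in Hx by lra.
    rewrite Heq by lra. reflexivity. }
  assert (E2 : RInt (fun s => plus (l s (u2 s)) (f s)) a0 t = RInt (fun s => plus (l s (u1 s)) (f s)) a0 t).
  { apply (@RInt_ext Z). intros x Hx. rewrite Rmin_left, Rmax_right in Hx by lra.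
    rewrite Heq by lra. reflexivity. }
  rewrite E1, E2, <- !Heq by lra. split; auto.
Qed.

Lemma DRel_ext_f (D : Z -> Prop) A b l a0 a1 (u f1 f2 : R -> Z) :
  a0 <= a1 -> (forall t, a0 <= t <= a1 -> f1 t = f2 t) ->
  DRel D A b l a0 a1 u f1 -> DRel D A b l a0 a1 u f2.
Proof.
  intros Ha Heq H t Ht. destruct (H t Ht) as [H1 H2].
  assert (E2 : RInt (fun s => plus (l s (u s)) (f2 s)) a0 t = RInt (fun s => plus (l s (u s)) (f1 s)) a0 t).
  { apply (@RInt_ext Z). intros x Hx. rewrite Rmin_left, Rmax_right in Hx by lra.
    rewrite Heq by lra. reflexivity. }
  rewrite E2. split; auto.
Qed.

Lemma DRel_minus (D : Z -> Prop) A a b l (u1 u2 f1 f2 : R -> Z) :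
  closed_op D A -> 0 <= a -> opfam a b -> opfam a l ->
  cont_on 0 a u1 -> cont_on 0 a u2 -> cont_on 0 a f1 -> cont_on 0 a f2 ->
  DRel D A b l 0 a u1 f1 -> DRel D A b l 0 a u2 f2 ->
  DRel D A b l 0 a (fun t => minus (u1 t) (u2 t)) (fun t => minus (f1 t) (f2 t)).
Proof.
  intros HA Ha Hb Hl Hu1 Hu2 Hf1 Hf2 H1 H2 t Ht.
  destruct (H1 t Ht) as [D1 E1]. destruct (H2 t Ht) as [D2 E2].
  assert (Hex : forall g : R -> Z, cont_on 0 a g -> ex_RInt g 0 t) by (intros; apply (EXI 0 a); auto; lra).
  assert (EB : RInt (fun s => b s (minus (u1 s) (u2 s))) 0 t =
               minus (RInt (fun s => b s (u1 s)) 0 t) (RInt (fun s => b s (u2 s)) 0 t)).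
  { rewrite <- (@RInt_minus Z) by (apply Hex; apply cont_on_op; auto).
    apply (@RInt_ext Z). intros x Hx. rewrite Rmin_left, Rmax_right in Hx by lra.
    apply lin_minus. apply (proj1 Hb); lra. }
  assert (EL : RInt (fun s => plus (l s (minus (u1 s) (u2 s))) (minus (f1 s) (f2 s))) 0 t =
               minus (RInt (fun s => plus (l s (u1 s)) (f1 s)) 0 t)
                     (RInt (fun s => plus (l s (u2 s)) (f2 s)) 0 t)).
  { rewrite <- (@RInt_minus Z) by (apply Hex; apply cont_on_plus; auto; apply cont_on_op; auto).
    apply (@RInt_ext Z). intros x Hx. rewrite Rmin_left, Rmax_right in Hx by lra.
    rewrite (lin_minus (l x)) by (apply (proj1 Hl); lra). symmetry. apply (@minus_plus_plus Z). }
  rewrite EB, EL. destruct (closed_minus D A _ _ HA D1 D2) as [Dm Am].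
  split; auto. rewrite Am, E1, E2. rewrite <- !(@minus_plus_plus Z). reflexivity.
Qed.

Lemma DRel_plus (D : Z -> Prop) A a b l (u1 u2 f1 f2 : R -> Z) :
  closed_op D A -> 0 <= a -> opfam a b -> opfam a l ->
  cont_on 0 a u1 -> cont_on 0 a u2 -> cont_on 0 a f1 -> cont_on 0 a f2 ->
  DRel D A b l 0 a u1 f1 -> DRel D A b l 0 a u2 f2 ->
  DRel D A b l 0 a (fun t => plus (u1 t) (u2 t)) (fun t => plus (f1 t) (f2 t)).
Proof.
  intros HA Ha Hb Hl Hu1 Hu2 Hf1 Hf2 H1 H2 t Ht.
  destruct (H1 t Ht) as [D1 E1]. destruct (H2 t Ht) as [D2 E2].
  assert (Hex : forall g : R -> Z, cont_on 0 a g -> ex_RInt g 0 t) by (intros; apply (EXI 0 a); auto; lra).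
  assert (EB : RInt (fun s => b s (plus (u1 s) (u2 s))) 0 t =
               plus (RInt (fun s => b s (u1 s)) 0 t) (RInt (fun s => b s (u2 s)) 0 t)).
  { rewrite <- (@RInt_plus Z) by (apply Hex; apply cont_on_op; auto).
    apply (@RInt_ext Z). intros x Hx. rewrite Rmin_left, Rmax_right in Hx by lra.
    apply (linear_plus _ (proj1 Hb x ltac:(lra))). }
  assert (EL : RInt (fun s => plus (l s (plus (u1 s) (u2 s))) (plus (f1 s) (f2 s))) 0 t =
               plus (RInt (fun s => plus (l s (u1 s)) (f1 s)) 0 t)
                     (RInt (fun s => plus (l s (u2 s)) (f2 s)) 0 t)).
  { rewrite <- (@RInt_plus Z) by (apply Hex; apply cont_on_plus; auto; apply cont_on_op; auto).
    apply (@RInt_ext Z). intros x Hx. rewrite Rmin_left, Rmax_right in Hx by lra.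
    rewrite (linear_plus _ (proj1 Hl x ltac:(lra))). apply (@plus_plus_swap Z). }
  rewrite EB, EL. destruct HA as [_ [Hp _]]. destruct (Hp _ _ D1 D2) as [Dm Am].
  split; auto. rewrite Am, E1, E2. rewrite (@plus_plus_swap Z _ (RInt _ 0 t) _ (RInt _ 0 t)).
  rewrite (@plus_plus_swap Z (u1 0)). reflexivity.
Qed.

End Gen.


Lemma Rmax0_lip x y : Rabs (Rmax x 0 - Rmax y 0) <= Rabs (x - y).
Proof. unfold Rmax; repeat destruct Rle_dec; unfold Rabs; repeat destruct Rcase_abs; lra. Qed.

Section Glue.
Context {M : Type} (tau : topology M) {Z : CompleteNormedModule R_AbsRing}.

Lemma phi_cont phi : semiflow tau phi -> forall w s0 U, 0 <= s0 -> is_open tau U -> U (phi s0 w) ->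
  exists d, 0 < d /\ forall s, 0 <= s -> Rabs (s - s0) < d -> U (phi s w).
Proof.
  intros [_ [_ Hc]] w s0 U Hs0 HU HUw.
  destruct (Hc s0 w U Hs0 HU HUw) as [d [U' [Hd [HU' [HU'w H]]]]].
  exists d; split; auto.
Qed.

Lemma opfam_of phi (B : M -> Z -> Z) w a : semiflow tau phi -> (forall w, is_linear (B w)) ->
  cont_MZ tau B -> opfam a (fun s => B (phi s w)).
Proof.
  intros Hsf Hlin Hc. split.
  - intros; apply Hlin.
  - intros s0 x0 eps Hs0 He.
    destruct (Hc (phi s0 w) x0 eps He) as [U [d1 [HU [HUw [Hd1 H1]]]]].
    destruct (phi_cont phi Hsf w s0 U ltac:(lra) HU HUw) as [d2 [Hd2 H2]].
    exists (Rmin d1 d2); split; [apply Rmin_pos; auto|].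
    intros s x Hs Hss Hx. apply H1.
    + apply H2; [lra|]. eapply Rlt_le_trans; [exact Hss| apply Rmin_r].
    + eapply Rlt_le_trans; [exact Hx| apply Rmin_l].
Qed.

Lemma cont_of_continuous (g : R -> Z) a0 a1 : (forall t, continuous g t) -> cont_on a0 a1 g.
Proof.
  intros Hg t eps Ht He. destruct (cont_eps g t (Hg t) eps He) as [d [Hd H]].
  exists d; split; auto.
Qed.

Lemma lin_zero_gen (l : Z -> Z) : is_linear l -> l zero = zero.
Proof. apply lin_zero. Qed.

Lemma minus_minus_zero (x y z : Z) : minus (minus x y) z = zero -> x = plus y z.
Proof.
  intros H. assert (E : minus x y = z).
  { rewrite <- (@plus_minus_r Z (minus x y) z), H. apply (@plus_zero_l Z). }
  rewrite <- (@plus_minus_r Z x y), E. apply (@plus_comm Z).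
Qed.

End Glue.


Section P1.
Context {M : Type} (tau : topology M) {Z : CompleteNormedModule R_AbsRing}.

Lemma cont_on_zero a0 a1 : cont_on a0 a1 (fun _ : R => (zero : Z)).
Proof.
  intros t eps _ He. exists 1; split; [lra|]. intros.
  rewrite (@minus_eq_zero Z). replace (norm _) with 0; [lra|]. symmetry. exact (@norm_zero R_AbsRing Z).
Qed.

Lemma part1 phi D A (B L : M -> Z -> Z) : semiflow tau phi -> closed_op D A ->
  coef_op tau phi B -> coef_op tau phi L ->
  forall T0, C0_cocycle tau D A B L phi T0 ->
  forall (g : R -> Z) w a (z : R -> Z), (forall t, continuous g t) -> 0 <= a ->
  mild_sol D A B L phi w g 0 a z ->
  forall t, 0 <= t <= a ->
    z t = plus (T0 t w (z 0)) (RInt (fun s => T0 (t - s) (phi s w) (g s)) 0 t).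
Proof.
  intros Hsf HA HB HL T0 HT g w a z Hg Ha Hz.
  destruct HT as [Tlin [T0id [Tcoc [Tcont Tmild]]]].
  destruct HB as [Blin [Bc _]]. destruct HL as [Llin [Lc _]].
  set (b := fun s => B (phi s w)). set (l := fun s => L (phi s w)).
  assert (Hb : opfam a b) by (apply (opfam_of tau); auto).
  assert (Hl : opfam a l) by (apply (opfam_of tau); auto).
  assert (Hgc : cont_on 0 a g) by (apply cont_of_continuous; auto).
  assert (Hsf' := Hsf). destruct Hsf' as [phi0 [phiadd _]].
  set (W := fun r s => T0 (Rmax (s - r) 0) (phi r w) (g r)).
  assert (HW : cont2 0 a W).
  { intros r0 s0 eps Hr0 Hs0 He.
    destruct (Tcont (Rmax (s0 - r0) 0) (phi r0 w) (g r0) eps (Rmax_r _ _) He)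
      as [d [U [Hd [HU [HUw HT]]]]].
    destruct (phi_cont tau phi Hsf w r0 U ltac:(lra) HU HUw) as [d2 [Hd2 H2]].
    destruct (Hgc r0 d Hr0 Hd) as [d3 [Hd3 H3]].
    exists (Rmin (d/2) (Rmin d2 d3)). split.
    { apply Rmin_pos; [lra| apply Rmin_pos; auto]. }
    intros r s Hr Hs Hrr Hss.
    assert (Hrr1 : Rabs (r - r0) < d / 2) by (eapply Rlt_le_trans; [exact Hrr| apply Rmin_l]).
    assert (Hss1 : Rabs (s - s0) < d / 2) by (eapply Rlt_le_trans; [exact Hss| apply Rmin_l]).
    assert (Hrr2 : Rabs (r - r0) < d2).
    { eapply Rlt_le_trans; [exact Hrr|]. eapply Rle_trans; [apply Rmin_r| apply Rmin_l]. }
    assert (Hrr3 : Rabs (r - r0) < d3).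
    { eapply Rlt_le_trans; [exact Hrr|]. eapply Rle_trans; [apply Rmin_r| apply Rmin_r]. }
    unfold W. apply HT.
    - apply Rmax_r.
    - eapply Rle_lt_trans; [apply Rmax0_lip|].
      replace (s - r - (s0 - r0)) with ((s - s0) + - (r - r0)) by ring.
      eapply Rle_lt_trans; [apply Rabs_triang|]. rewrite Rabs_Ropp. lra.
    - apply H2; [lra| exact Hrr2].
    - apply H3; [lra| exact Hrr3]. }
  assert (Hk : forall r t, 0 <= r -> r <= t -> t <= a ->
     D (RInt (fun s => b s (W r s)) r t) /\
     W r t = plus (plus (W r r) (A (RInt (fun s => b s (W r s)) r t)))
                  (RInt (fun s => l s (W r s)) r t)).
  { intros r t Hr Hrt Hta.
    destruct (Tmild (phi r w) (g r) (t - r) ltac:(lra)) as [[_ Hm] _].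
    destruct (Hm (t - r) ltac:(lra)) as [Hm1 Hm2].
    assert (HWr : cont_on 0 a (W r)) by (apply cont2_snd; auto; lra).
    assert (EB : RInt (fun s => b s (W r s)) r t =
                 RInt (fun s => B (phi s (phi r w)) (T0 s (phi r w) (g r))) 0 (t - r)).
    { assert (Sh := SHIFT (fun s => b s (W r s)) r 0 (t - r)).
      replace (0 + r) with r in Sh by ring. replace (t - r + r) with t in Sh by ring.
      rewrite <- Sh. 2: { apply (EXI 0 a); [lra|lra|]. apply cont_on_op; auto. }
      apply (@RInt_ext Z). intros y Hy. rewrite Rmin_left, Rmax_right in Hy by lra.
      unfold b, W. rewrite phiadd by lra. replace (y + r - r) with y by ring.
      rewrite Rmax_left by lra. reflexivity. }
    assert (EL : RInt (fun s => l s (W r s)) r t =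
                 RInt (fun s => plus (L (phi s (phi r w)) (T0 s (phi r w) (g r))) (zero_fun s)) 0 (t - r)).
    { assert (Sh := SHIFT (fun s => l s (W r s)) r 0 (t - r)).
      replace (0 + r) with r in Sh by ring. replace (t - r + r) with t in Sh by ring.
      rewrite <- Sh. 2: { apply (EXI 0 a); [lra|lra|]. apply cont_on_op; auto. }
      apply (@RInt_ext Z). intros y Hy. rewrite Rmin_left, Rmax_right in Hy by lra.
      unfold l, W, zero_fun. rewrite phiadd by lra. replace (y + r - r) with y by ring.
      rewrite Rmax_left by lra. symmetry. apply (@plus_zero_r Z). }
    assert (EW1 : W r t = T0 (t - r) (phi r w) (g r)) by (unfold W; rewrite Rmax_left by lra; reflexivity).
    assert (EW2 : W r r = T0 0 (phi r w) (g r)) by (unfold W; rewrite Rminus_eq_0, Rmax_left by lra; reflexivity).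
    rewrite EW1, EW2, EB, EL. split; [exact Hm1| exact Hm2]. }
  destruct (FD D A a b l W HA Ha Hb Hl HW Hk) as [Hv HDv].
  set (v := fun t => RInt (fun r => W r t) 0 t) in *.
  assert (HDv' : DRel D A b l 0 a v g).
  { apply (DRel_ext_f D A b l 0 a v (fun s => W s s)); auto.
    intros s Hs. unfold W. rewrite Rminus_eq_0, Rmax_left by lra. apply T0id. }
  set (u0 := fun t => T0 t w (z 0)).
  destruct (Tmild w (z 0) a Ha) as [[Hu0c Hu0] _].
  assert (HD0 : DRel D A b l 0 a u0 zero_fun) by exact Hu0.
  destruct Hz as [Hzc HzD].
  assert (HDz : DRel D A b l 0 a z g) by exact HzD.
  assert (Hc1 : cont_on 0 a (fun t => minus (z t) (u0 t))) by (apply cont_on_minus; auto).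
  assert (HD1 := DRel_minus D A a b l z u0 g zero_fun HA Ha Hb Hl Hzc Hu0c Hgc (cont_on_zero 0 a) HDz HD0).
  assert (HD2 := DRel_minus D A a b l _ v _ g HA Ha Hb Hl Hc1 Hv
                   (cont_on_minus 0 a _ _ Hgc (cont_on_zero 0 a)) Hgc HD1 HDv').
  set (u := fun t => minus (minus (z t) (u0 t)) (v t)) in *.
  assert (HD3 : DRel D A b l 0 a u zero_fun).
  { eapply DRel_ext_f; [exact Ha| |exact HD2].
    intros s Hs. unfold zero_fun. rewrite (@minus_zero_r Z). apply (@minus_eq_zero Z). }
  assert (Hmu : mild_sol D A B L phi w zero_fun 0 a u).
  { split; [apply cont_on_minus; auto| exact HD3]. }
  assert (Hu00 : u 0 = zero).
  { unfold u, u0, v. rewrite T0id, (@RInt_point Z), (@minus_eq_zero Z). apply (@minus_zero_r Z). }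
  destruct (Tmild w zero a Ha) as [_ Huniq].
  intros t Ht.
  assert (Hut : u t = zero).
  { rewrite (Huniq u Hmu Hu00 t Ht). apply lin_zero. apply Tlin; lra. }
  unfold u in Hut. apply minus_minus_zero in Hut. rewrite Hut. unfold u0, v. f_equal.
  apply (@RInt_ext Z). intros s Hs. rewrite Rmin_left, Rmax_right in Hs by lra.
  unfold W. rewrite Rmax_left by lra. reflexivity.
Qed.

End P1.


Lemma minus_minus_self {G : AbelianGroup} (y p : G) : minus y (minus y p) = p.
Proof.
  rewrite <- (opp_minus p y). unfold minus at 1. rewrite opp_opp.
  rewrite plus_comm. apply plus_minus_r.
Qed.

Lemma minus_zero_opp {G : AbelianGroup} (y : G) : minus zero (opp y) = y.
Proof. unfold minus. rewrite opp_opp. apply plus_zero_l. Qed.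

Lemma Rmin_lip x y x' y' : Rabs (Rmin x y - Rmin x' y') <= Rabs (x - x') + Rabs (y - y').
Proof. unfold Rmin; repeat destruct Rle_dec; unfold Rabs; repeat destruct Rcase_abs; lra. Qed.

Section Sub.
Context {M : Type} {Z : CompleteNormedModule R_AbsRing}.
Variable (P : M -> Z -> Z).
Hypothesis Plin : forall w, is_linear (P w).
Hypothesis Pidem : forall w z, P w (P w z) = P w z.

Lemma Xsp_P w x : Xsp P w (P w x).
Proof. unfold Xsp. apply Pidem. Qed.

Lemma Pc_lin w : is_linear (Pc P w).
Proof.
  unfold Pc. destruct (linear_norm _ (Plin w)) as [K [HK HK']]. constructor.
  - intros x y. rewrite (linear_plus _ (Plin w)). apply (@minus_plus_plus Z).
  - intros k x. rewrite (linear_scal _ (Plin w)). symmetry. apply (@scal_minus_distr_l _ Z).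
  - exists (1 + K). split; [lra|]. intros x.
    eapply Rle_trans; [apply norm_minus_le|]. specialize (HK' x). lra.
Qed.

Lemma Ysp_Pc w x : Ysp P w (Pc P w x).
Proof.
  unfold Ysp, Pc. rewrite (lin_minus (P w)) by auto. rewrite Pidem, (@minus_eq_zero Z).
  apply (@minus_zero_r Z).
Qed.

Lemma Y_P0 w y : Ysp P w y -> P w y = zero.
Proof.
  unfold Ysp, Pc. intros H. rewrite <- (@minus_minus_self Z y (P w y)). rewrite H.
  apply (@minus_eq_zero Z).
Qed.

Lemma X_Pc0 w x : Xsp P w x -> Pc P w x = zero.
Proof. unfold Xsp, Pc. intros H. rewrite H. apply (@minus_eq_zero Z). Qed.

Lemma Xsp_zero w : Xsp P w zero.
Proof. unfold Xsp. apply lin_zero; auto. Qed.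

Lemma Ysp_zero w : Ysp P w zero.
Proof. unfold Ysp, Pc. rewrite lin_zero by auto. apply (@minus_eq_zero Z). Qed.

Lemma Xsp_plus w x y : Xsp P w x -> Xsp P w y -> Xsp P w (plus x y).
Proof. unfold Xsp. intros H1 H2. rewrite (linear_plus _ (Plin w)), H1, H2. reflexivity. Qed.

Lemma Ysp_minus w x y : Ysp P w x -> Ysp P w y -> Ysp P w (minus x y).
Proof.
  unfold Ysp. intros H1 H2. rewrite (lin_minus (Pc P w)) by apply Pc_lin. rewrite H1, H2. reflexivity.
Qed.

Lemma lb_zero (S1 S2 : Z -> Prop) T : lin_between S1 S2 T -> S1 zero -> T zero = zero.
Proof.
  intros [_ [_ [Hs _]]] H0.
  assert (E : (zero : Z) = scal (0:R) (zero:Z)) by (symmetry; apply (@scal_zero_l _ Z)).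
  rewrite E at 1. rewrite (Hs 0 zero H0). apply (@scal_zero_l _ Z).
Qed.

Lemma Xsp_RInt w (f : R -> Z) c d : c <= d -> cont_on c d f ->
  (forall s, c <= s <= d -> Xsp P w (f s)) -> Xsp P w (RInt f c d).
Proof.
  intros Hcd Hf H. unfold Xsp. rewrite (LC (P w)) by auto.
  apply (@RInt_ext Z). intros x Hx. rewrite Rmin_left, Rmax_right in Hx by lra. apply H; lra.
Qed.

Lemma Ysp_RInt w (f : R -> Z) c d : c <= d -> cont_on c d f ->
  (forall s, c <= s <= d -> Ysp P w (f s)) -> Ysp P w (RInt f c d).
Proof.
  intros Hcd Hf H. unfold Ysp. rewrite (LC (Pc P w)) by (auto; apply Pc_lin).
  apply (@RInt_ext Z). intros x Hx. rewrite Rmin_left, Rmax_right in Hx by lra. apply H; lra.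
Qed.

End Sub.

Lemma cont_on_ext {Z : CompleteNormedModule R_AbsRing} a b (u1 u2 : R -> Z) :
  cont_on a b u1 -> (forall t, a <= t <= b -> u1 t = u2 t) -> cont_on a b u2.
Proof.
  intros H E t eps Ht He. destruct (H t eps Ht He) as [d [Hd Hd']].
  exists d; split; auto. intros s Hs Hst. rewrite <- !E by auto. apply Hd'; auto.
Qed.


Section P2.
Context {M : Type} (tau : topology M) {Z : CompleteNormedModule R_AbsRing}.

Lemma part2 phi D A (B L : M -> Z -> Z) : semiflow tau phi -> closed_op D A ->
  coef_op tau phi B -> coef_op tau phi L ->
  forall (P : M -> Z -> Z) (T1 Sb : R -> M -> Z -> Z),
   C0_correspondence tau D A B L phi P T1 Sb ->
   forall (g : R -> Z) (w : M) (a : R) (z : R -> Z),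
     (forall t, continuous g t) -> 0 <= a ->
     mild_sol D A B L phi w g 0 a z ->
     let x := fun t => P (phi t w) (z t) in
     let y := fun t => Pc P (phi t w) (z t) in
     forall t, 0 <= t <= a ->
       x t = plus (T1 t w (x 0))
                  (RInt (fun s => T1 (t - s) (phi s w) (P (phi s w) (g s))) 0 t) /\
       y t = minus (Sb (a - t) (phi t w) (y a))
                   (RInt (fun s => Sb (s - t) (phi t w) (Pc P (phi s w) (g s))) t a).
Proof.
  intros Hsf HA HB HL P T1 Sb HC g w a z Hg Ha Hz x y.
  destruct HC as [Plin [Pidem [Pcont [T1lin [T1id [T1coc [T1cont [Sblin [Sbid [Sbcoc [Sbcont BVP]]]]]]]]]]].
  destruct HB as [Blin [Bc _]]. destruct HL as [Llin [Lc _]].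
  set (b := fun s => B (phi s w)). set (l := fun s => L (phi s w)).
  assert (Hb : opfam a b) by (apply (opfam_of tau); auto).
  assert (Hl : opfam a l) by (apply (opfam_of tau); auto).
  assert (HP : opfam a (fun s => P (phi s w))) by (apply (opfam_of tau); auto).
  assert (Hgc : cont_on 0 a g) by (apply cont_of_continuous; auto).
  assert (Hsf' := Hsf). destruct Hsf' as [phi0 [phiadd _]].
  set (gP := fun s => P (phi s w) (g s)).
  set (gY := fun s => Pc P (phi s w) (g s)).
  assert (HgP : cont_on 0 a gP) by exact (cont_on_op a (fun s => P (phi s w)) g HP Hgc).
  assert (HgY : cont_on 0 a gY) by (unfold gY, Pc; apply cont_on_minus; [exact Hgc | exact HgP]).
  assert (Hgsum : forall s, plus (gP s) (gY s) = g s)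
    by (intros s; unfold gP, gY, Pc; apply (@plus_minus_l Z)).
  set (U1 := fun r s => T1 (Rmax (s - r) 0) (phi r w) (gP r)).
  set (V := fun r s => Sb (s - Rmin r s) (phi (Rmin r s) w) (gY s)).
  assert (HU1 : cont2 0 a U1).
  { intros r0 s0 eps Hr0 Hs0 He.
    destruct (T1cont (Rmax (s0 - r0) 0) (phi r0 w) (gP r0) eps (Rmax_r _ _)
                ltac:(unfold Xsp, gP; apply Pidem) He) as [d [U [Hd [HU [HUw HT]]]]].
    destruct (phi_cont tau phi Hsf w r0 U ltac:(lra) HU HUw) as [d2 [Hd2 H2]].
    destruct (HgP r0 d Hr0 Hd) as [d3 [Hd3 H3]].
    exists (Rmin (d/2) (Rmin d2 d3)). split.
    { apply Rmin_pos; [lra| apply Rmin_pos; auto]. }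
    intros r s Hr Hs Hrr Hss.
    assert (Hrr1 : Rabs (r - r0) < d / 2) by (eapply Rlt_le_trans; [exact Hrr| apply Rmin_l]).
    assert (Hss1 : Rabs (s - s0) < d / 2) by (eapply Rlt_le_trans; [exact Hss| apply Rmin_l]).
    assert (Hrr2 : Rabs (r - r0) < d2).
    { eapply Rlt_le_trans; [exact Hrr|]. eapply Rle_trans; [apply Rmin_r| apply Rmin_l]. }
    assert (Hrr3 : Rabs (r - r0) < d3).
    { eapply Rlt_le_trans; [exact Hrr|]. eapply Rle_trans; [apply Rmin_r| apply Rmin_r]. }
    unfold U1. apply HT.
    - apply Rmax_r.
    - eapply Rle_lt_trans; [apply Rmax0_lip|].
      replace (s - r - (s0 - r0)) with ((s - s0) + - (r - r0)) by ring.
      eapply Rle_lt_trans; [apply Rabs_triang|]. rewrite Rabs_Ropp. lra.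
    - apply H2; [lra| exact Hrr2].
    - unfold Xsp, gP; apply Pidem.
    - apply H3; [lra| exact Hrr3]. }
  assert (Hys : forall r s, 0 <= r -> 0 <= s ->
     Ysp P (phi (s - Rmin r s) (phi (Rmin r s) w)) (gY s)).
  { intros r s Hr Hs. rewrite <- phiadd.
    - replace (s - Rmin r s + Rmin r s) with s by ring. unfold gY. apply Ysp_Pc; auto.
    - pose proof (Rmin_r r s); lra.
    - apply Rmin_glb; lra. }
  assert (HV : cont2 0 a V).
  { intros r0 s0 eps Hr0 Hs0 He.
    assert (Hm0 : 0 <= Rmin r0 s0) by (apply Rmin_glb; lra).
    destruct (Sbcont (s0 - Rmin r0 s0) (phi (Rmin r0 s0) w) (gY s0) eps
                ltac:(pose proof (Rmin_r r0 s0); lra) (Hys r0 s0 ltac:(lra) ltac:(lra)) He)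
      as [d [U [Hd [HU [HUw HT]]]]].
    destruct (phi_cont tau phi Hsf w (Rmin r0 s0) U Hm0 HU HUw) as [d2 [Hd2 H2]].
    destruct (HgY s0 d Hs0 Hd) as [d3 [Hd3 H3]].
    exists (Rmin (d/3) (Rmin (d2/2) d3)). split.
    { apply Rmin_pos; [lra| apply Rmin_pos; [lra|auto]]. }
    intros r s Hr Hs Hrr Hss.
    assert (Hrr1 : Rabs (r - r0) < d / 3) by (eapply Rlt_le_trans; [exact Hrr| apply Rmin_l]).
    assert (Hss1 : Rabs (s - s0) < d / 3) by (eapply Rlt_le_trans; [exact Hss| apply Rmin_l]).
    assert (Hrr2 : Rabs (r - r0) < d2 / 2).
    { eapply Rlt_le_trans; [exact Hrr|]. eapply Rle_trans; [apply Rmin_r| apply Rmin_l]. }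
    assert (Hss2 : Rabs (s - s0) < d2 / 2).
    { eapply Rlt_le_trans; [exact Hss|]. eapply Rle_trans; [apply Rmin_r| apply Rmin_l]. }
    assert (Hss3 : Rabs (s - s0) < d3).
    { eapply Rlt_le_trans; [exact Hss|]. eapply Rle_trans; [apply Rmin_r| apply Rmin_r]. }
    pose proof (Rmin_lip r s r0 s0) as Hml.
    unfold V. apply HT.
    - pose proof (Rmin_r r s); lra.
    - replace (s - Rmin r s - (s0 - Rmin r0 s0)) with ((s - s0) + - (Rmin r s - Rmin r0 s0)) by ring.
      eapply Rle_lt_trans; [apply Rabs_triang|]. rewrite Rabs_Ropp. lra.
    - apply H2; [apply Rmin_glb; lra| lra].
    - apply Hys; lra.
    - apply H3; [lra| exact Hss3]. }
  assert (Sb0 : forall t w', 0 <= t -> Sb t w' zero = zero).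
  { intros t w' Ht. apply (lb_zero _ _ _ (Sblin t w' Ht)). apply Ysp_zero; auto. }
  assert (T10 : forall t w', 0 <= t -> T1 t w' zero = zero).
  { intros t w' Ht. apply (lb_zero _ _ _ (T1lin t w' Ht)). apply Xsp_zero; auto. }
  assert (HkU : forall r t, 0 <= r -> r <= t -> t <= a ->
     D (RInt (fun s => b s (U1 r s)) r t) /\
     U1 r t = plus (plus (U1 r r) (A (RInt (fun s => b s (U1 r s)) r t)))
                  (RInt (fun s => l s (U1 r s)) r t)).
  { intros r t Hr Hrt Hta.
    pose proof (BVP w r a (gP r) zero Hr ltac:(lra) ltac:(unfold Xsp, gP; apply Pidem)
                  (Ysp_zero P Plin _)) as HB'.
    cbv zeta in HB'. destruct HB' as [[[_ Hms] _] _].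
    assert (HDr : DRel D A b l r a
       (fun s => plus (T1 (s - r) (phi r w) (gP r)) (Sb (a - s) (phi s w) zero)) zero_fun)
      by exact Hms.
    apply (DRel_ext_u D A b l r a _ (U1 r)) in HDr; [| lra |].
    2: { intros s Hs. unfold U1. rewrite Sb0 by lra. rewrite (@plus_zero_r Z).
         rewrite Rmax_left by lra. reflexivity. }
    destruct (HDr t ltac:(lra)) as [D1 E1]. split; [exact D1|].
    rewrite E1 at 1. f_equal. apply (@RInt_ext Z). intros s _. unfold zero_fun.
    apply (@plus_zero_r Z). }
  assert (HkV : forall s t, 0 <= t -> t <= s -> s <= a ->
     D (RInt (fun r => b r (V r s)) 0 t) /\
     V t s = plus (plus (V 0 s) (A (RInt (fun r => b r (V r s)) 0 t)))
                  (RInt (fun r => l r (V r s)) 0 t)).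
  { intros s t Ht Hts Hsa.
    pose proof (BVP w 0 s zero (gY s) ltac:(lra) ltac:(lra) (Xsp_zero P Plin _)
                  ltac:(unfold gY; apply Ysp_Pc; auto)) as HB'.
    cbv zeta in HB'. destruct HB' as [[[_ Hms] _] _].
    assert (HDr : DRel D A b l 0 s
       (fun r => plus (T1 (r - 0) (phi 0 w) zero) (Sb (s - r) (phi r w) (gY s))) zero_fun)
      by exact Hms.
    apply (DRel_ext_u D A b l 0 s _ (fun r => V r s)) in HDr; [| lra |].
    2: { intros r Hr. unfold V. rewrite T10 by lra. rewrite (@plus_zero_l Z).
         rewrite Rmin_left by lra. reflexivity. }
    destruct (HDr t ltac:(lra)) as [D1 E1]. split; [exact D1|].
    rewrite E1 at 1. f_equal. apply (@RInt_ext Z). intros r _. unfold zero_fun.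
    apply (@plus_zero_r Z). }
  destruct (FD D A a b l U1 HA Ha Hb Hl HU1 HkU) as [Hv1c HDv1].
  set (v1 := fun t => RInt (fun r => U1 r t) 0 t) in *.
  apply (DRel_ext_f D A b l 0 a v1 _ gP Ha) in HDv1.
  2: { intros s Hs. unfold U1. rewrite Rminus_eq_0, Rmax_left by lra. apply T1id.
       unfold Xsp, gP. apply Pidem. }
  destruct (BD D A a b l V HA Ha Hb Hl HV HkV) as [Hq2c HDq2].
  set (q2 := fun t => RInt (fun s => V t s) t a) in *.
  apply (DRel_ext_f D A b l 0 a q2 _ (fun r => opp (gY r)) Ha) in HDq2.
  2: { intros r Hr. unfold V. rewrite Rmin_left, Rminus_eq_0 by lra. f_equal. apply Sbid.
       unfold gY. apply Ysp_Pc; auto. }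
  set (X0 := x 0).
  assert (HX0w : Xsp P w X0) by (unfold X0, x, Xsp; rewrite phi0; apply Pidem).
  set (Tp := fun t => T1 t w X0).
  assert (HTp : cont_on 0 a Tp /\ DRel D A b l 0 a Tp zero_fun).
  { pose proof (BVP w 0 a X0 zero ltac:(lra) Ha ltac:(rewrite phi0; exact HX0w)
                  (Ysp_zero P Plin _)) as HB'.
    cbv zeta in HB'. destruct HB' as [[[Hc Hms] _] _].
    assert (E : forall t, 0 <= t <= a ->
       plus (T1 (t - 0) (phi 0 w) X0) (Sb (a - t) (phi t w) zero) = Tp t).
    { intros t Ht. unfold Tp. rewrite Sb0 by lra. rewrite (@plus_zero_r Z), phi0, Rminus_0_r.
      reflexivity. }
    split.
    - exact (cont_on_ext 0 a _ _ Hc E).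
    - apply (DRel_ext_u D A b l 0 a _ Tp zero_fun Ha E). exact Hms. }
  destruct HTp as [HTpc HDTp].
  set (Ya := y a).
  assert (HYa : Ysp P (phi a w) Ya) by (unfold Ya, y; apply Ysp_Pc; auto).
  set (S := fun t => Sb (a - t) (phi t w) Ya).
  assert (HS : cont_on 0 a S /\ DRel D A b l 0 a S zero_fun).
  { pose proof (BVP w 0 a zero Ya ltac:(lra) Ha (Xsp_zero P Plin _) HYa) as HB'.
    cbv zeta in HB'. destruct HB' as [[[Hc Hms] _] _].
    assert (E : forall t, 0 <= t <= a ->
       plus (T1 (t - 0) (phi 0 w) zero) (Sb (a - t) (phi t w) Ya) = S t).
    { intros t Ht. unfold S. rewrite T10 by lra. apply (@plus_zero_l Z). }
    split.
    - exact (cont_on_ext 0 a _ _ Hc E).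
    - apply (DRel_ext_u D A b l 0 a _ S zero_fun Ha E). exact Hms. }
  destruct HS as [HSc HDS].
  assert (Hz0 := cont_on_zero 0 a : cont_on 0 a (fun _ => (zero : Z))).
  assert (HgYo : cont_on 0 a (fun r => opp (gY r))).
  { apply (cont_on_lin 0 a _ opp); auto. constructor.
    - intros; apply (@opp_plus Z).
    - intros; symmetry; apply (@scal_opp_r _ Z).
    - exists 1; split; [lra|]. intros. rewrite (@norm_opp R_AbsRing Z). lra. }
  assert (HDp := DRel_plus D A a b l Tp v1 zero_fun gP HA Ha Hb Hl HTpc Hv1c Hz0 HgP HDTp HDv1).
  assert (HDq := DRel_minus D A a b l S q2 zero_fun _ HA Ha Hb Hl HSc Hq2c Hz0 HgYo HDS HDq2).
  set (p := fun t => plus (Tp t) (v1 t)) in *.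
  set (q := fun t => minus (S t) (q2 t)) in *.
  assert (Hpc : cont_on 0 a p) by (apply cont_on_plus; auto).
  assert (Hqc : cont_on 0 a q) by (apply cont_on_minus; auto).
  assert (HDvv := DRel_plus D A a b l p q _ _ HA Ha Hb Hl Hpc Hqc
                    (cont_on_plus 0 a _ _ Hz0 HgP) (cont_on_minus 0 a _ _ Hz0 HgYo) HDp HDq).
  destruct Hz as [Hzc HDz0].
  assert (HDz : DRel D A b l 0 a z g) by exact HDz0.
  set (vv := fun t => plus (p t) (q t)) in *.
  assert (Hvvc : cont_on 0 a vv) by (apply cont_on_plus; auto).
  assert (HDu := DRel_minus D A a b l z vv g _ HA Ha Hb Hl Hzc Hvvc Hgc
                   (cont_on_plus 0 a _ _ (cont_on_plus 0 a _ _ Hz0 HgP) (cont_on_minus 0 a _ _ Hz0 HgYo))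
                   HDz HDvv).
  set (u := fun t => minus (z t) (vv t)) in *.
  apply (DRel_ext_f D A b l 0 a u _ zero_fun Ha) in HDu.
  2: { intros s Hs. unfold zero_fun. rewrite (@plus_zero_l Z), (@minus_zero_opp Z), Hgsum.
       apply (@minus_eq_zero Z). }
  assert (XP : forall t, 0 <= t <= a -> Xsp P (phi t w) (p t)).
  { intros t Ht. unfold p. apply Xsp_plus; auto.
    - unfold Tp. apply (T1lin t w ltac:(lra)). exact HX0w.
    - unfold v1. apply Xsp_RInt; auto; [lra| |].
      + apply (cont_on_sub 0 a); [apply cont2_fst; auto| lra | lra].
      + intros r Hr. unfold U1. rewrite Rmax_left by lra.
        replace (phi t w) with (phi (t - r) (phi r w)).
        * apply (T1lin (t - r) (phi r w) ltac:(lra)). unfold Xsp, gP. apply Pidem.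
        * rewrite <- phiadd by lra. f_equal. ring. }
  assert (YP : forall t, 0 <= t <= a -> Ysp P (phi t w) (q t)).
  { intros t Ht. unfold q. apply Ysp_minus; auto.
    - unfold S. apply (Sblin (a - t) (phi t w) ltac:(lra)).
      rewrite <- phiadd by lra. replace (a - t + t) with a by ring. exact HYa.
    - unfold q2. apply Ysp_RInt; auto; [lra| |].
      + apply (cont_on_sub 0 a); [apply cont2_snd; auto| lra | lra].
      + intros s Hs. unfold V. rewrite Rmin_left by lra.
        apply (Sblin (s - t) (phi t w) ltac:(lra)).
        rewrite <- phiadd by lra. replace (s - t + t) with s by ring.
        unfold gY. apply Ysp_Pc; auto. }
  assert (Hu0 : P (phi 0 w) (u 0) = zero).
  { unfold u, vv. rewrite (lin_minus (P (phi 0 w))) by auto.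
    rewrite (linear_plus _ (Plin (phi 0 w))).
    rewrite (XP 0 ltac:(lra)), (Y_P0 P _ _ (YP 0 ltac:(lra))).
    unfold p, Tp, v1. rewrite T1id by exact HX0w. rewrite (@RInt_point Z).
    rewrite !(@plus_zero_r Z). unfold X0, x. apply (@minus_eq_zero Z). }
  assert (Hua : Pc P (phi a w) (u a) = zero).
  { unfold u, vv. rewrite (lin_minus (Pc P (phi a w))) by (apply Pc_lin; auto).
    rewrite (linear_plus _ (Pc_lin P Plin (phi a w))).
    rewrite (X_Pc0 P _ _ (XP a ltac:(lra))).
    assert (Eq : Pc P (phi a w) (q a) = q a) by exact (YP a ltac:(lra)).
    rewrite Eq, (@plus_zero_l Z).
    unfold q, S, q2. rewrite Rminus_eq_0, (@RInt_point Z), (@minus_zero_r Z).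
    rewrite Sbid by exact HYa. unfold Ya, y. apply (@minus_eq_zero Z). }
  pose proof (BVP w 0 a zero zero ltac:(lra) Ha (Xsp_zero P Plin _) (Ysp_zero P Plin _)) as HB'.
  cbv zeta in HB'. destruct HB' as [_ Huniq].
  assert (Hmu : mild_sol D A B L phi w zero_fun 0 a u).
  { split; [apply cont_on_minus; auto| exact HDu]. }
  intros t Ht.
  assert (Hut : u t = zero).
  { rewrite (Huniq u Hmu Hu0 Hua t Ht). rewrite T10 by lra. rewrite Sb0 by lra.
    apply (@plus_zero_l Z). }
  assert (Hzt : z t = vv t).
  { unfold u in Hut. rewrite <- (@plus_minus_r Z (z t) (vv t)), Hut. apply (@plus_zero_l Z). }
  split.
  - change (x t) with (P (phi t w) (z t)). rewrite Hzt. unfold vv.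
    rewrite (linear_plus _ (Plin (phi t w))).
    rewrite (XP t Ht), (Y_P0 P _ _ (YP t Ht)), (@plus_zero_r Z).
    unfold p, Tp, v1. f_equal. apply (@RInt_ext Z). intros r Hr.
    rewrite Rmin_left, Rmax_right in Hr by lra. unfold U1, gP. rewrite Rmax_left by lra. reflexivity.
  - change (y t) with (Pc P (phi t w) (z t)). rewrite Hzt. unfold vv.
    rewrite (linear_plus _ (Pc_lin P Plin (phi t w))).
    rewrite (X_Pc0 P _ _ (XP t Ht)).
    assert (Eq : Pc P (phi t w) (q t) = q t) by exact (YP t Ht).
    rewrite Eq, (@plus_zero_l Z).
    unfold q, S, q2. f_equal. apply (@RInt_ext Z). intros s Hs.
    rewrite Rmin_left, Rmax_right in Hs by lra. unfold V, gY. rewrite Rmin_left by lra. reflexivity.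
Qed.

End P2.


Theorem lemma3p27 (M : Type) (tau : topology M) (Z : CompleteNormedModule R_AbsRing)
  (phi : R -> M -> M) (D : Z -> Prop) (A : Z -> Z) (B L : M -> Z -> Z) :
  hausdorff tau -> semiflow tau phi -> closed_op D A ->
  coef_op tau phi B -> coef_op tau phi L ->
  (* (1) variation of constants for a C_0 linear cocycle *)
  (forall T0 : R -> M -> Z -> Z, C0_cocycle tau D A B L phi T0 ->
   forall (g : R -> Z) (w : M) (a : R) (z : R -> Z),
     (forall t, continuous g t) -> 0 <= a ->
     mild_sol D A B L phi w g 0 a z ->
     forall t, 0 <= t <= a ->
       z t = plus (T0 t w (z 0)) (RInt (fun s => T0 (t - s) (phi s w) (g s)) 0 t)) /\
  (* (2) variation of constants for a C_0 cocycle correspondence *)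
  (forall (P : M -> Z -> Z) (T1 Sb : R -> M -> Z -> Z),
   C0_correspondence tau D A B L phi P T1 Sb ->
   forall (g : R -> Z) (w : M) (a : R) (z : R -> Z),
     (forall t, continuous g t) -> 0 <= a ->
     mild_sol D A B L phi w g 0 a z ->
     let x := fun t => P (phi t w) (z t) in
     let y := fun t => Pc P (phi t w) (z t) in
     forall t, 0 <= t <= a ->
       x t = plus (T1 t w (x 0))
                  (RInt (fun s => T1 (t - s) (phi s w) (P (phi s w) (g s))) 0 t) /\
       y t = minus (Sb (a - t) (phi t w) (y a))
                   (RInt (fun s => Sb (s - t) (phi t w) (Pc P (phi s w) (g s))) t a)).
Proof.
  intros _ Hsf HA HB HL. split.
  - intros T0 HT g w a z Hg Ha Hz t Ht. exact (part1 tau phi D A B L Hsf HA HB HL T0 HT g w a z Hg Ha Hz t Ht).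
  - intros P T1 Sb HC g w a z Hg Ha Hz. exact (part2 tau phi D A B L Hsf HA HB HL P T1 Sb HC g w a z Hg Ha Hz).
Qed.
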